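(* Let $I,J\subset\mathbb{R}$ be open intervals, $M=I\times J$ with coordinates $(u,v)$, let $q,f:I\to\mathbb{R}$ be smooth functions of $u$ and $r,g:J\to\mathbb{R}$ smooth functions of $v$, with $f(u)g(v)(1+q(u)r(v))^2\neq0$ on $M$. Then: (i) there exist smooth $F_1:I\to\mathrm{SL}_2\mathbb{R}$, $F_2:J\to\mathrm{SL}_2\mathbb{R}$ with $F_1^{-1}dF_1=\begin{pmatrix}q&-q^2\\1&-q\end{pmatrix}f\,du$ and $F_2^{-1}dF_2=\begin{pmatrix}r&-r^2\\1&-r\end{pmatrix}g\,dv$, and for any such solution $\varphi=F_1F_2^t:M\to\mathbb{H}^3_1(-1)$ is a conformal timelike immersion of constant mean curvature $\pm1$ whose induced metric is conformal to $(1+qr)^2f g\,du\,dv$; (ii) there exist smooth $F_1:I\to\mathrm{SL}_2\mathbb{R}$, $F_2:J\to\mathrm{SL}_2\mathbb{R}$ with $F_1^{-1}dF_1=\begin{pmatrix}q&-q^2\\1&-q\end{pmatrix}f\,du$ and $(dF_2^{-1})F_2=\begin{pmatrix}r&1\\-r^2&-r\end{pmatrix}g\,dv$, and for any such solution $\psi=F_1F_2^{-1}:M\to\mathbb{H}^3_1(-1)$ is a conformal timelike immersion of constant mean curvature $\pm1$ whose induced metric is conformal to $(1+qr)^2fg\,du\,dv$.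
   Context: $\mathbb{E}^4_2$ is $\mathbb{R}^4$ with metric $-(dx_0)^2-(dx_1)^2+(dx_2)^2+(dx_3)^2$, identified with $M_2(\mathbb{R})$ via $(x_0,x_1,x_2,x_3)\mapsto \begin{pmatrix}x_0+x_3& x_1+x_2\\ -x_1+x_2 & x_0-x_3\end{pmatrix}$, so $\langle u,v\rangle=\tfrac12\{\operatorname{tr}(uv)-\operatorname{tr}u\operatorname{tr}v\}$ and $\mathbb{H}^3_1(-1)=\{\langle x,x\rangle=-1\}=\mathrm{SL}_2\mathbb{R}$. Conformal timelike with null coordinates $(u,v)$: $\langle\varphi_u,\varphi_u\rangle=\langle\varphi_v,\varphi_v\rangle=0\neq\langle\varphi_u,\varphi_v\rangle$. Mean curvature w.r.t. unit normal $N$: $H=2e^{-\omega}\langle\varphi_{uv},N\rangle$ where the metric is $e^\omega du\,dv$; ''constant mean curvature $\pm1$'' means $H\equiv1$ or $H\equiv-1$ for the chosen unit normal. The metric $(1+qr)^2fg\,du\,dv$ is the induced metric of the timelike minimal surface in Minkowski 3-space with Weierstrass data $(q,f)$, $(r,g)$. *)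

(* Defs.v *)
From Stdlib Require Import Reals.
From Coquelicot Require Import Coquelicot.
Open Scope R_scope.

Definition rbar_open_interval (a b : Rbar) (x : R) : Prop :=
  Rbar_lt a x /\ Rbar_lt x b.

Definition smooth1 (I : R -> Prop) (h : R -> R) : Prop :=
  forall (n : nat) (x : R), I x -> ex_derive_n h n x.

(** Iterated partial derivatives of a function of two variables;
    [true] = d/du, [false] = d/dv (applied from the head of the list
    outermost). *)
Fixpoint pd (ds : list bool) (h : R -> R -> R) : R -> R -> R :=
  match ds with
  | nil => h
  | cons true ds' => fun u v => Derive (fun s => pd ds' h s v) u
  | cons false ds' => fun u v => Derive (fun t => pd ds' h u t) v
  end.

Definition smooth2 (D : R -> R -> Prop) (h : R -> R -> R) : Prop :=
  forall (ds : list bool) (u v : R), D u v ->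
    ex_derive (fun s => pd ds h s v) u /\
    ex_derive (fun t => pd ds h u t) v /\
    continuity_2d_pt (pd ds h) u v.

Record Mat2 : Type := mkM { m11 : R ; m12 : R ; m21 : R ; m22 : R }.

Definition mmul (A B : Mat2) : Mat2 :=
  mkM (m11 A * m11 B + m12 A * m21 B) (m11 A * m12 B + m12 A * m22 B)
      (m21 A * m11 B + m22 A * m21 B) (m21 A * m12 B + m22 A * m22 B).
Definition mtr (A : Mat2) : Mat2 := mkM (m11 A) (m21 A) (m12 A) (m22 A).
Definition mdet (A : Mat2) : R := m11 A * m22 A - m12 A * m21 A.
Definition mscale (c : R) (A : Mat2) : Mat2 :=
  mkM (c * m11 A) (c * m12 A) (c * m21 A) (c * m22 A).
Definition madd (A B : Mat2) : Mat2 :=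
  mkM (m11 A + m11 B) (m12 A + m12 B) (m21 A + m21 B) (m22 A + m22 B).
Definition mzero : Mat2 := mkM 0 0 0 0.
Definition minv (A : Mat2) : Mat2 :=
  mscale (/ mdet A) (mkM (m22 A) (- m12 A) (- m21 A) (m11 A)).

Definition inSL2 (A : Mat2) : Prop := mdet A = 1.

Definition mderiv (F : R -> Mat2) (x : R) : Mat2 :=
  mkM (Derive (fun t => m11 (F t)) x) (Derive (fun t => m12 (F t)) x)
      (Derive (fun t => m21 (F t)) x) (Derive (fun t => m22 (F t)) x).

Definition msmooth1 (I : R -> Prop) (F : R -> Mat2) : Prop :=
  smooth1 I (fun t => m11 (F t)) /\ smooth1 I (fun t => m12 (F t)) /\
  smooth1 I (fun t => m21 (F t)) /\ smooth1 I (fun t => m22 (F t)).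

Definition msmooth2 (D : R -> R -> Prop) (F : R -> R -> Mat2) : Prop :=
  smooth2 D (fun u v => m11 (F u v)) /\ smooth2 D (fun u v => m12 (F u v)) /\
  smooth2 D (fun u v => m21 (F u v)) /\ smooth2 D (fun u v => m22 (F u v)).

Definition d_u (F : R -> R -> Mat2) : R -> R -> Mat2 :=
  fun u v => mderiv (fun s => F s v) u.
Definition d_v (F : R -> R -> Mat2) : R -> R -> Mat2 :=
  fun u v => mderiv (fun t => F u t) v.

Record E4 : Type := mkE { x0 : R ; x1 : R ; x2 : R ; x3 : R }.
Definition ip4 (a b : E4) : R :=
  - x0 a * x0 b - x1 a * x1 b + x2 a * x2 b + x3 a * x3 b.

(** The identification E^4_2 = M_2(R):
    (x0,x1,x2,x3) |-> [[x0+x3, x1+x2], [-x1+x2, x0-x3]];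
    [coords] is its inverse. *)
Definition toMat (x : E4) : Mat2 :=
  mkM (x0 x + x3 x) (x1 x + x2 x) (- x1 x + x2 x) (x0 x - x3 x).
Definition coords (A : Mat2) : E4 :=
  mkE ((m11 A + m22 A) / 2) ((m12 A - m21 A) / 2)
      ((m12 A + m21 A) / 2) ((m11 A - m22 A) / 2).

Definition ip (A B : Mat2) : R := ip4 (coords A) (coords B).

Definition inH31 (A : Mat2) : Prop := ip A A = -1.

Definition lin_indep2 (A B : Mat2) : Prop :=
  forall a b : R, madd (mscale a A) (mscale b B) = mzero -> a = 0 /\ b = 0.

(** [phi] is a conformal timelike immersion D -> H^3_1(-1) with null
    coordinates (u,v). *)
Definition conformal_timelike_immersion (D : R -> R -> Prop)
    (phi : R -> R -> Mat2) : Prop :=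
  msmooth2 D phi /\
  forall u v, D u v ->
    inH31 (phi u v) /\
    lin_indep2 (d_u phi u v) (d_v phi u v) /\
    ip (d_u phi u v) (d_u phi u v) = 0 /\
    ip (d_v phi u v) (d_v phi u v) = 0 /\
    ip (d_u phi u v) (d_v phi u v) <> 0.

(** Coefficient of the induced metric [metric_coef phi du dv] (= e^omega). *)
Definition metric_coef (phi : R -> R -> Mat2) (u v : R) : R :=
  2 * ip (d_u phi u v) (d_v phi u v).

(** Unit normal of the surface [phi] in H^3_1(-1): smooth, orthogonal to
    the position vector and to the tangent plane, of length 1 (the normal of
    a timelike surface in H^3_1 is spacelike). *)
Definition unit_normal (D : R -> R -> Prop) (phi N : R -> R -> Mat2) : Prop :=
  msmooth2 D N /\
  forall u v, D u v ->
    ip (N u v) (N u v) = 1 /\ ip (N u v) (phi u v) = 0 /\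
    ip (N u v) (d_u phi u v) = 0 /\ ip (N u v) (d_v phi u v) = 0.

Definition mean_curv (phi N : R -> R -> Mat2) (u v : R) : R :=
  2 * / metric_coef phi u v * ip (d_v (d_u phi) u v) (N u v).

Definition cmc_pm1 (D : R -> R -> Prop) (phi : R -> R -> Mat2) : Prop :=
  exists N, unit_normal D phi N /\
    ((forall u v, D u v -> mean_curv phi N u v = 1) \/
     (forall u v, D u v -> mean_curv phi N u v = -1)).

Definition metric_conformal_to (D : R -> R -> Prop) (phi : R -> R -> Mat2)
    (lam : R -> R -> R) : Prop :=
  exists mu : R -> R -> R, smooth2 D mu /\
    forall u v, D u v -> 0 < mu u v /\ metric_coef phi u v = mu u v * lam u v.

Definition Aq (q : R) : Mat2 := mkM q (- q ^ 2) 1 (- q).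
Definition Br (r : R) : Mat2 := mkM r 1 (- r ^ 2) (- r).

(* Main.v *)
Require Import Defs.
From Stdlib Require Import Reals Lra Lia Psatz Arith Factorial Classical List.
From Coquelicot Require Import Coquelicot.
Open Scope R_scope.

Ltac toR := match goal with |- ?x = ?y => change (@eq R x y) end.

Lemma rlt_open_l (a : Rbar) (x : R) : Rbar_lt a x ->
  exists e : posreal, forall y, Rabs (y - x) < e -> Rbar_lt a y.
Proof.
  destruct a as [a| |]; simpl; intro H.
  - assert (He : 0 < x - a) by lra. exists (mkposreal _ He). simpl.
    intros y Hy. apply Rabs_def2 in Hy. lra.
  - contradiction.
  - exists (mkposreal 1 Rlt_0_1). auto.
Qed.

Lemma rlt_open_r (b : Rbar) (x : R) : Rbar_lt x b ->
  exists e : posreal, forall y, Rabs (y - x) < e -> Rbar_lt y b.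
Proof.
  destruct b as [b| |]; simpl; intro H.
  - assert (He : 0 < b - x) by lra. exists (mkposreal _ He). simpl.
    intros y Hy. apply Rabs_def2 in Hy. lra.
  - exists (mkposreal 1 Rlt_0_1). auto.
  - contradiction.
Qed.

Lemma I_ball (a b : Rbar) (x : R) : rbar_open_interval a b x ->
  exists e : posreal, forall y, Rabs (y - x) < e -> rbar_open_interval a b y.
Proof.
  intros [H1 H2]. destruct (rlt_open_l a x H1) as [e1 He1].
  destruct (rlt_open_r b x H2) as [e2 He2].
  assert (He : 0 < Rmin e1 e2) by (apply Rmin_pos; apply cond_pos).
  exists (mkposreal _ He). simpl. intros y Hy. split.
  - apply He1. eapply Rlt_le_trans. exact Hy. apply Rmin_l.
  - apply He2. eapply Rlt_le_trans. exact Hy. apply Rmin_r.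
Qed.

Lemma I_locally (a b : Rbar) (x : R) (P : R -> Prop) :
  rbar_open_interval a b x ->
  (forall y, rbar_open_interval a b y -> P y) -> locally x P.
Proof.
  intros Hx HP. destruct (I_ball a b x Hx) as [e He]. exists e.
  intros y Hy. apply HP, He. exact Hy.
Qed.

Lemma I_conv (a b : Rbar) (x y z : R) : rbar_open_interval a b x ->
  rbar_open_interval a b y -> x <= z <= y -> rbar_open_interval a b z.
Proof.
  intros [Hx1 Hx2] [Hy1 Hy2] Hz. split.
  - destruct a as [a| |]; simpl in *; auto; lra.
  - destruct b as [b| |]; simpl in *; auto; lra.
Qed.

Lemma I_seg (a b : Rbar) (x y z : R) : rbar_open_interval a b x ->
  rbar_open_interval a b y -> Rmin x y <= z <= Rmax x y -> rbar_open_interval a b z.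
Proof.
  intros Hx Hy Hz. unfold Rmin, Rmax in Hz. destruct (Rle_dec x y).
  - exact (I_conv a b x y z Hx Hy Hz).
  - apply (I_conv a b y x z Hy Hx). lra.
Qed.

Fixpoint Sm1 (a b : Rbar) (n : nat) (h : R -> R) : Prop :=
  match n with
  | O => True
  | S n => (forall t, rbar_open_interval a b t -> ex_derive h t) /\ Sm1 a b n (Derive h)
  end.

Lemma Derive_n_Derive (h : R -> R) (k : nat) (x : R) :
  Derive_n (Derive h) k x = Derive_n h (S k) x.
Proof.
  revert x; induction k; intro x; simpl.
  - reflexivity.
  - apply Derive_ext. intro t. rewrite IHk. reflexivity.
Qed.



Lemma Sm1_smooth (a b : Rbar) h : (forall n, Sm1 a b n h) -> smooth1 (rbar_open_interval a b) h.
Proof.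
  intros H k. 
  assert (G : forall n h, Sm1 a b n h -> forall k t, (k <= n)%nat -> rbar_open_interval a b t -> ex_derive_n h k t).
  { clear. induction n as [|n IH]; intros h Hn k t Hk Ht.
    - destruct k; [exact I | lia].
    - destruct Hn as [Hd Hn]. destruct k as [|k]; [exact I|].
      destruct k as [|k].
      + simpl. eapply ex_derive_ext; [|apply Hd; exact Ht]. reflexivity.
      + specialize (IH _ Hn (S k) t ltac:(lia) Ht). simpl in IH |- *.
        eapply ex_derive_ext; [|exact IH]. intro s. apply Derive_n_Derive. }
  intros t Ht. exact (G k h (H k) k t (le_n _) Ht).
Qed.

Lemma smooth_Sm1 (a b : Rbar) h : smooth1 (rbar_open_interval a b) h -> forall n, Sm1 a b n h.
Proof.
  intros H n. revert h H. induction n as [|n IH]; intros h H; simpl; [exact I|]. split.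
  - intros t Ht. exact (H 1%nat t Ht).
  - apply IH. intros k t Ht. specialize (H (S k) t Ht). destruct k; [exact I|].
    simpl in H |- *. eapply ex_derive_ext; [|exact H]. intro s. symmetry. apply Derive_n_Derive.
Qed.

Lemma Sm1_mono a b n h : Sm1 a b (S n) h -> Sm1 a b n h.
Proof.
  revert h; induction n; intros h H; simpl in *; [exact I|].
  destruct H as [H1 H2]. split; auto.
Qed.

Lemma Sm1_ext a b n h k : (forall t, rbar_open_interval a b t -> h t = k t) ->
  Sm1 a b n h -> Sm1 a b n k.
Proof.
  revert h k; induction n as [|n IH]; intros h k E H; simpl in *; [exact I|].
  destruct H as [H1 H2]. split.
  - intros t Ht. eapply ex_derive_ext_loc; [|apply H1; exact Ht].
    apply (I_locally a b t); auto.
  - eapply IH; [|exact H2]. intros t Ht. apply Derive_ext_loc.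
    apply (I_locally a b t); auto.
Qed.

Lemma Sm1_const a b n c : Sm1 a b n (fun _ => c).
Proof.
  revert c; induction n as [|n IH]; intros c; simpl; [exact I|]. split.
  - intros; apply ex_derive_const.
  - eapply Sm1_ext; [|apply (IH 0)]. intros t _. simpl. rewrite Derive_const. reflexivity.
Qed.

Lemma Sm1_plus a b n h k : Sm1 a b n h -> Sm1 a b n k -> Sm1 a b n (fun t => h t + k t).
Proof.
  revert h k; induction n as [|n IH]; intros h k Hh Hk; simpl in *; [exact I|].
  destruct Hh as [Hh1 Hh2], Hk as [Hk1 Hk2]. split.
  - intros t Ht. apply (ex_derive_plus h k); auto.
  - eapply Sm1_ext; [|apply (IH _ _ Hh2 Hk2)]. intros t Ht. simpl.
    rewrite Derive_plus; auto.
Qed.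

Lemma Sm1_mult a b n h k : Sm1 a b n h -> Sm1 a b n k -> Sm1 a b n (fun t => h t * k t).
Proof.
  revert h k; induction n as [|n IH]; intros h k Hh Hk; [exact I|].
  pose proof (Sm1_mono _ _ _ _ Hh) as Hh'. pose proof (Sm1_mono _ _ _ _ Hk) as Hk'.
  simpl in *.
  destruct Hh as [Hh1 Hh2], Hk as [Hk1 Hk2]. split.
  - intros t Ht. apply ex_derive_mult; auto.
  - eapply Sm1_ext; [|apply Sm1_plus; [apply (IH _ _ Hh2 Hk')|apply (IH _ _ Hh' Hk2)]].
    intros t Ht. simpl. rewrite Derive_mult; auto.
Qed.

Lemma Sm1_opp a b n h : Sm1 a b n h -> Sm1 a b n (fun t => - h t).
Proof.
  intro H. eapply Sm1_ext; [|apply (Sm1_mult _ _ _ _ _ (Sm1_const a b n (-1)) H)].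
  intros; simpl; ring.
Qed.

Lemma sm1_plus a b h k : smooth1 (rbar_open_interval a b) h -> smooth1 (rbar_open_interval a b) k ->
  smooth1 (rbar_open_interval a b) (fun t => h t + k t).
Proof. intros; apply Sm1_smooth; intro n; apply Sm1_plus; apply smooth_Sm1; auto. Qed.
Lemma sm1_mult a b h k : smooth1 (rbar_open_interval a b) h -> smooth1 (rbar_open_interval a b) k ->
  smooth1 (rbar_open_interval a b) (fun t => h t * k t).
Proof. intros; apply Sm1_smooth; intro n; apply Sm1_mult; apply smooth_Sm1; auto. Qed.
Lemma sm1_opp a b h : smooth1 (rbar_open_interval a b) h ->
  smooth1 (rbar_open_interval a b) (fun t => - h t).
Proof. intros; apply Sm1_smooth; intro n; apply Sm1_opp; apply smooth_Sm1; auto. Qed.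
Lemma sm1_const a b c : smooth1 (rbar_open_interval a b) (fun _ => c).
Proof. intros; apply Sm1_smooth; intro n; apply Sm1_const. Qed.
Lemma sm1_ext a b h k : (forall t, rbar_open_interval a b t -> h t = k t) ->
  smooth1 (rbar_open_interval a b) h -> smooth1 (rbar_open_interval a b) k.
Proof. intros E H; apply Sm1_smooth; intro n; eapply Sm1_ext; [exact E|]; apply smooth_Sm1; auto. Qed.
Lemma sm1_ex_derive a b h t : smooth1 (rbar_open_interval a b) h -> rbar_open_interval a b t -> ex_derive h t.
Proof. intros H Ht. exact (H 1%nat t Ht). Qed.
Lemma sm1_Derive a b h : smooth1 (rbar_open_interval a b) h -> smooth1 (rbar_open_interval a b) (Derive h).
Proof. intros H. apply Sm1_smooth. intro n. pose proof (smooth_Sm1 _ _ _ H (S n)). simpl in H0. tauto. Qed.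

Section S2.
Variables a b c d : Rbar.
Let M := fun u v => rbar_open_interval a b u /\ rbar_open_interval c d v.

Definition Du (h : R -> R -> R) := fun u v => Derive (fun s => h s v) u.
Definition Dv (h : R -> R -> R) := fun u v => Derive (fun t => h u t) v.

Definition B0 (h : R -> R -> R) := forall u v, M u v ->
  ex_derive (fun s => h s v) u /\ ex_derive (fun t => h u t) v /\ continuity_2d_pt h u v.

Fixpoint Sm2 (n : nat) (h : R -> R -> R) : Prop :=
  match n with
  | O => B0 h
  | S n => B0 h /\ Sm2 n (Du h) /\ Sm2 n (Dv h)
  end.

Lemma Sm2_B0 n h : Sm2 n h -> B0 h.
Proof. destruct n; simpl; tauto. Qed.

Lemma Sm2_mono n h : Sm2 (S n) h -> Sm2 n h.
Proof.
  revert h; induction n; intros h H; simpl in *; [tauto|].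
  destruct H as [H1 [H2 H3]]. split; [auto|split; auto].
Qed.

Lemma pd_app ds bb h : pd (ds ++ bb :: nil) h = pd ds (pd (bb :: nil) h).
Proof.
  induction ds as [|x ds IH]; simpl; [reflexivity|].
  destruct x; rewrite IH; reflexivity.
Qed.

Lemma Sm2_pd n h : Sm2 n h -> forall ds, (length ds <= n)%nat -> B0 (pd ds h).
Proof.
  revert h; induction n as [|n IH]; intros h H ds Hl.
  - destruct ds; [simpl; exact H| simpl in Hl; lia].
  - destruct ds as [|x ds'] using rev_ind; [simpl; exact (Sm2_B0 _ _ H)|].
    clear IHds'. rewrite app_length in Hl; simpl in Hl.
    rewrite pd_app. destruct H as [_ [Hu Hv]].
    destruct x; simpl; [apply (IH _ Hu)|apply (IH _ Hv)]; lia.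
Qed.

Lemma Sm2_smooth h : (forall n, Sm2 n h) -> smooth2 M h.
Proof.
  intros H ds u v Hm. apply (Sm2_pd (length ds) h (H _) ds (le_n _) u v Hm).
Qed.

Lemma M_box u v : M u v -> exists e : posreal,
  forall u' v', Rabs (u' - u) < e -> Rabs (v' - v) < e -> M u' v'.
Proof.
  intros [Hu Hv]. destruct (I_ball a b u Hu) as [e1 He1].
  destruct (I_ball c d v Hv) as [e2 He2].
  assert (He : 0 < Rmin e1 e2) by (apply Rmin_pos; apply cond_pos).
  exists (mkposreal _ He). simpl. intros u' v' H1 H2. split.
  - apply He1. eapply Rlt_le_trans. exact H1. apply Rmin_l.
  - apply He2. eapply Rlt_le_trans. exact H2. apply Rmin_r.
Qed.

Lemma Sm2_ext n h k : (forall u v, M u v -> h u v = k u v) -> Sm2 n h -> Sm2 n k.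
Proof.
  assert (HB : forall h k, (forall u v, M u v -> h u v = k u v) -> B0 h -> B0 k).
  { clear. intros h k E H u v Hm. destruct (H u v Hm) as [H1 [H2 H3]].
    destruct (M_box u v Hm) as [e He]. split; [|split].
    - eapply ex_derive_ext_loc; [|exact H1]. exists e. intros s Hs.
      apply E, He; [exact Hs|]. rewrite Rminus_eq_0, Rabs_R0. apply cond_pos.
    - eapply ex_derive_ext_loc; [|exact H2]. exists e. intros s Hs.
      apply E, He; [|exact Hs]. rewrite Rminus_eq_0, Rabs_R0. apply cond_pos.
    - eapply continuity_2d_pt_ext_loc; [|exact H3]. exists e. intros u' v' Hu' Hv'.
      apply E, He; auto. }
  revert h k; induction n as [|n IH]; intros h k E H; simpl in *.
  - eapply HB; eauto.
  - destruct H as [H1 [H2 H3]]. split; [eapply HB; eauto|split].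
    + eapply IH; [|exact H2]. intros u v Hm. unfold Du. apply Derive_ext_loc.
      destruct (M_box u v Hm) as [e He]. exists e. intros s Hs.
      apply E, He; [exact Hs|]. rewrite Rminus_eq_0, Rabs_R0. apply cond_pos.
    + eapply IH; [|exact H3]. intros u v Hm. unfold Dv. apply Derive_ext_loc.
      destruct (M_box u v Hm) as [e He]. exists e. intros s Hs.
      apply E, He; [|exact Hs]. rewrite Rminus_eq_0, Rabs_R0. apply cond_pos.
Qed.

Lemma Sm2_const n (k : R) : Sm2 n (fun _ _ => k).
Proof.
  assert (HB : forall k, B0 (fun _ _ => k)).
  { intros k0 u v _. split; [apply ex_derive_const|split; [apply ex_derive_const|]].
    apply continuity_2d_pt_const. }
  revert k; induction n as [|n IH]; intro k; simpl; [apply HB|].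
  split; [apply HB|split].
  - eapply Sm2_ext; [|apply (IH 0)]. intros; unfold Du; rewrite Derive_const; reflexivity.
  - eapply Sm2_ext; [|apply (IH 0)]. intros; unfold Dv; rewrite Derive_const; reflexivity.
Qed.

Lemma Sm2_plus n h k : Sm2 n h -> Sm2 n k -> Sm2 n (fun u v => h u v + k u v).
Proof.
  assert (HB : forall h k, B0 h -> B0 k -> B0 (fun u v => h u v + k u v)).
  { intros h0 k0 Hh Hk u v Hm. destruct (Hh u v Hm) as [A1 [A2 A3]].
    destruct (Hk u v Hm) as [C1 [C2 C3]]. split; [|split].
    - apply (ex_derive_plus (fun s => h0 s v) (fun s => k0 s v)); auto.
    - apply (ex_derive_plus (fun s => h0 u s) (fun s => k0 u s)); auto.
    - apply continuity_2d_pt_plus; auto. }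
  revert h k; induction n as [|n IH]; intros h k Hh Hk; simpl in *; [apply HB; auto|].
  destruct Hh as [A1 [A2 A3]], Hk as [C1 [C2 C3]]. split; [apply HB; auto|split].
  - eapply Sm2_ext; [|apply (IH _ _ A2 C2)]. intros u v Hm. unfold Du.
    rewrite Derive_plus; [reflexivity| apply (A1 u v Hm)|apply (C1 u v Hm)].
  - eapply Sm2_ext; [|apply (IH _ _ A3 C3)]. intros u v Hm. unfold Dv.
    rewrite Derive_plus; [reflexivity| apply (A1 u v Hm)|apply (C1 u v Hm)].
Qed.

Lemma Sm2_mult n h k : Sm2 n h -> Sm2 n k -> Sm2 n (fun u v => h u v * k u v).
Proof.
  assert (HB : forall h k, B0 h -> B0 k -> B0 (fun u v => h u v * k u v)).
  { intros h0 k0 Hh Hk u v Hm. destruct (Hh u v Hm) as [A1 [A2 A3]].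
    destruct (Hk u v Hm) as [C1 [C2 C3]]. split; [|split].
    - apply (ex_derive_mult (fun s => h0 s v) (fun s => k0 s v)); auto.
    - apply (ex_derive_mult (fun s => h0 u s) (fun s => k0 u s)); auto.
    - apply continuity_2d_pt_mult; auto. }
  revert h k; induction n as [|n IH]; intros h k Hh Hk; [simpl in *; apply HB; auto|].
  pose proof (Sm2_mono _ _ Hh) as Hh'. pose proof (Sm2_mono _ _ Hk) as Hk'.
  simpl in Hh, Hk |- *.
  destruct Hh as [A1 [A2 A3]], Hk as [C1 [C2 C3]]. split; [apply HB; auto|split].
  - eapply Sm2_ext; [|apply Sm2_plus; [apply (IH _ _ A2 Hk')|apply (IH _ _ Hh' C2)]].
    intros u v Hm. unfold Du.
    rewrite Derive_mult; [reflexivity| apply (A1 u v Hm)|apply (C1 u v Hm)].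
  - eapply Sm2_ext; [|apply Sm2_plus; [apply (IH _ _ A3 Hk')|apply (IH _ _ Hh' C3)]].
    intros u v Hm. unfold Dv.
    rewrite Derive_mult; [reflexivity| apply (A1 u v Hm)|apply (C1 u v Hm)].
Qed.

Lemma Sm2_opp n h : Sm2 n h -> Sm2 n (fun u v => - h u v).
Proof.
  intro H. eapply Sm2_ext; [|apply (Sm2_mult _ _ _ (Sm2_const n (-1)) H)].
  intros; simpl; ring.
Qed.

Lemma Sm2_minus n h k : Sm2 n h -> Sm2 n k -> Sm2 n (fun u v => h u v - k u v).
Proof. intros; apply Sm2_plus; auto; apply Sm2_opp; auto. Qed.

Lemma Sm2_inv n h : Sm2 n h -> (forall u v, M u v -> h u v <> 0) ->
  Sm2 n (fun u v => / h u v).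
Proof.
  intro Hh0. intro Hnz.
  assert (HB : forall h, B0 h -> (forall u v, M u v -> h u v <> 0) -> B0 (fun u v => / h u v)).
  { intros h0 Hh Hz u v Hm. destruct (Hh u v Hm) as [A1 [A2 A3]]. split; [|split].
    - apply (ex_derive_inv (fun s => h0 s v)); auto.
    - apply (ex_derive_inv (fun s => h0 u s)); auto.
    - apply continuity_2d_pt_inv; auto. }
  revert h Hh0 Hnz; induction n as [|n IH]; intros h Hh Hz; [simpl in *; apply HB; auto|].
  pose proof (IH _ (Sm2_mono _ _ Hh) Hz) as Hi.
  simpl in Hh |- *. destruct Hh as [A1 [A2 A3]]. split; [apply HB; auto|split].
  - eapply Sm2_ext; [|apply Sm2_mult; [apply Sm2_opp; exact A2|apply (Sm2_mult _ _ _ Hi Hi)]].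
    intros u v Hm. unfold Du. rewrite Derive_inv; [|apply (A1 u v Hm)|apply Hz; auto].
    match goal with |- ?x = ?y => change (@eq R x y) end. field. apply Hz; auto.
  - eapply Sm2_ext; [|apply Sm2_mult; [apply Sm2_opp; exact A3|apply (Sm2_mult _ _ _ Hi Hi)]].
    intros u v Hm. unfold Dv. rewrite Derive_inv; [|apply (A1 u v Hm)|apply Hz; auto].
    match goal with |- ?x = ?y => change (@eq R x y) end. change (Derive (h u) v) with (Derive (fun t => h u t) v). field. apply Hz; auto.
Qed.

Lemma cont_of_ex_derive (f : R -> R) x : ex_derive f x -> continuity_pt f x.
Proof. intro H. apply continuity_pt_filterlim. apply (ex_derive_continuous f x H). Qed.

Lemma Sm1_one a0 b0 n h : Sm1 a0 b0 (S n) h -> Sm1 a0 b0 1 h.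
Proof. revert h; induction n; intros h H; [exact H|]. apply IHn. apply Sm1_mono. exact H. Qed.

Lemma Sm2_lift_u n (h : R -> R) : Sm1 a b (S n) h -> Sm2 n (fun u v => h u).
Proof.
  assert (HB : forall h, Sm1 a b 1 h -> B0 (fun u v => h u)).
  { intros h0 [H1 _] u v [Hu Hv]. split; [apply H1; auto|split; [apply ex_derive_const|]].
    apply (continuity_1d_2d_pt_comp h0 (fun u v => u)).
    - apply cont_of_ex_derive; auto.
    - apply continuity_2d_pt_id1. }
  revert h; induction n as [|n IH]; intros h H; [simpl; apply HB; auto|].
  split; [apply HB; apply Sm1_one with (S n); exact H|split].
  - apply (IH (Derive h)). destruct H as [_ H]. exact H.
  - eapply Sm2_ext; [|apply (Sm2_const n 0)]. intros; unfold Dv; rewrite Derive_const; reflexivity.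
Qed.

Lemma Sm2_lift_v n (h : R -> R) : Sm1 c d (S n) h -> Sm2 n (fun u v => h v).
Proof.
  assert (HB : forall h, Sm1 c d 1 h -> B0 (fun u v => h v)).
  { intros h0 [H1 _] u v [Hu Hv]. split; [apply ex_derive_const|split; [apply H1; auto|]].
    apply (continuity_1d_2d_pt_comp h0 (fun u v => v)).
    - apply cont_of_ex_derive; auto.
    - apply continuity_2d_pt_id2. }
  revert h; induction n as [|n IH]; intros h H; [simpl; apply HB; auto|].
  split; [apply HB; apply Sm1_one with (S n); exact H|split].
  - eapply Sm2_ext; [|apply (Sm2_const n 0)]. intros; unfold Du; rewrite Derive_const; reflexivity.
  - apply (IH (Derive h)). destruct H as [_ H]. exact H.
Qed.

End S2.


Lemma INT_pos (h : R -> R) (A : R) (m : nat) (t0 t : R) : t0 <= t ->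
  ex_RInt h t0 t ->
  (forall s, t0 <= s <= t -> Rabs (h s) <= A * (s - t0) ^ m) ->
  Rabs (RInt h t0 t) <= A * (t - t0) ^ (S m) / INR (S m).
Proof.
  intros Ht Hex Hb.
  assert (HP : is_RInt (fun s => A * (s - t0) ^ m) t0 t (A * (t - t0) ^ (S m) / INR (S m))).
  { assert (E : A * (t - t0) ^ (S m) / INR (S m) =
      minus (A * (t - t0) ^ (S m) / INR (S m)) (A * (t0 - t0) ^ (S m) / INR (S m))).
    { set (k := INR (S m)). unfold minus, plus, opp; simpl. unfold Rdiv. ring. }
    rewrite E. apply (is_RInt_derive (fun s => A * (s - t0) ^ (S m) / INR (S m))).
    - intros x _. auto_derive; [exact I|].
      change (match m with 0%nat => 1 | S _ => INR m + 1 end) with (INR (S m)).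
      replace (x + - t0) with (x - t0) by ring. field. apply not_0_INR; lia.
    - intros x _. apply (ex_derive_continuous (fun s => A * (s - t0) ^ m)). auto_derive. exact I. }
  eapply Rle_trans; [apply abs_RInt_le; auto|].
  rewrite <- (is_RInt_unique _ _ _ _ HP).
  apply RInt_le; auto.
  - apply (ex_RInt_norm h); auto.
  - eexists; exact HP.
  - intros x Hx. apply Hb; lra.
Qed.

Lemma INT_neg (h : R -> R) (A : R) (m : nat) (t0 t : R) : t <= t0 ->
  ex_RInt h t t0 ->
  (forall s, t <= s <= t0 -> Rabs (h s) <= A * (t0 - s) ^ m) ->
  Rabs (RInt h t t0) <= A * (t0 - t) ^ (S m) / INR (S m).
Proof.
  intros Ht Hex Hb.
  assert (HP : is_RInt (fun s => A * (t0 - s) ^ m) t t0 (A * (t0 - t) ^ (S m) / INR (S m))).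
  { assert (E : A * (t0 - t) ^ (S m) / INR (S m) =
      minus (- A * (t0 - t0) ^ (S m) / INR (S m)) (- A * (t0 - t) ^ (S m) / INR (S m))).
    { set (k := INR (S m)). unfold minus, plus, opp; simpl. unfold Rdiv. ring. }
    rewrite E. apply (is_RInt_derive (fun s => - A * (t0 - s) ^ (S m) / INR (S m))).
    - intros x _. auto_derive; [exact I|].
      change (match m with 0%nat => 1 | S _ => INR m + 1 end) with (INR (S m)).
      replace (t0 + - x) with (t0 - x) by ring. field. apply not_0_INR; lia.
    - intros x _. apply (ex_derive_continuous (fun s => A * (t0 - s) ^ m)). auto_derive. exact I. }
  eapply Rle_trans; [apply abs_RInt_le; auto|].
  rewrite <- (is_RInt_unique _ _ _ _ HP).
  apply RInt_le; auto.
  - apply (ex_RInt_norm h); auto.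
  - eexists; exact HP.
  - intros x Hx. apply Hb; lra.
Qed.

Lemma INT (h : R -> R) (A : R) (m : nat) (t0 t : R) :
  ex_RInt h t0 t ->
  (forall s, Rmin t0 t <= s <= Rmax t0 t -> Rabs (h s) <= A * Rabs (s - t0) ^ m) ->
  Rabs (RInt h t0 t) <= A * Rabs (t - t0) ^ (S m) / INR (S m).
Proof.
  intros Hex Hb. destruct (Rle_dec t0 t) as [Ht|Ht].
  - rewrite (Rabs_right (t - t0)) by lra. apply INT_pos; auto.
    intros s Hs. rewrite <- (Rabs_right (s - t0)) by lra. apply Hb.
    rewrite Rmin_left, Rmax_right by lra. lra.
  - rewrite (Rabs_left (t - t0)) by lra. rewrite <- opp_RInt_swap by (apply ex_RInt_swap; auto).
    replace (- (t - t0)) with (t0 - t) by ring.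
    change (Rabs (- RInt h t t0) <= A * (t0 - t) ^ S m / INR (S m)).
    rewrite Rabs_Ropp. apply INT_neg; [lra|apply ex_RInt_swap; auto|].
    intros s Hs. replace (t0 - s) with (- (s - t0)) by ring.
    rewrite <- (Rabs_left1 (s - t0)) by lra. apply Hb.
    rewrite Rmin_right, Rmax_left by lra. lra.
Qed.

Section ODE.
Variables (a b : Rbar) (c11 c12 c21 c22 : R -> R) (t0 y1 y2 : R).
Let I := rbar_open_interval a b.
Hypothesis Ht0 : I t0.
Hypothesis Hc11 : forall t, I t -> continuous c11 t.
Hypothesis Hc12 : forall t, I t -> continuous c12 t.
Hypothesis Hc21 : forall t, I t -> continuous c21 t.
Hypothesis Hc22 : forall t, I t -> continuous c22 t.

Fixpoint X (n : nat) (t : R) : R * R :=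
  match n with
  | O => (y1, y2)
  | S n => (y1 + RInt (fun s => fst (X n s) * c11 s + snd (X n s) * c21 s) t0 t,
            y2 + RInt (fun s => fst (X n s) * c12 s + snd (X n s) * c22 s) t0 t)
  end.

Definition g1 n s := fst (X n s) * c11 s + snd (X n s) * c21 s.
Definition g2 n s := fst (X n s) * c12 s + snd (X n s) * c22 s.

Lemma X_S1 n t : fst (X (S n) t) = y1 + RInt (g1 n) t0 t.
Proof. reflexivity. Qed.
Lemma X_S2 n t : snd (X (S n) t) = y2 + RInt (g2 n) t0 t.
Proof. reflexivity. Qed.

Lemma cont_lin (u1 u2 k1 k2 : R -> R) t : continuous u1 t -> continuous u2 t ->
  continuous k1 t -> continuous k2 t ->
  continuous (fun s => u1 s * k1 s + u2 s * k2 s) t.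
Proof.
  intros. apply (continuous_plus (fun s => u1 s * k1 s) (fun s => u2 s * k2 s));
  apply (continuous_mult u1 k1) || apply (continuous_mult u2 k2); auto.
Qed.

Lemma X_reg : forall n, (forall t, I t -> continuous (fun s => fst (X n s)) t /\
                                   continuous (fun s => snd (X n s)) t) /\
  (forall t, I t -> is_derive (fun s => fst (X (S n) s)) t (g1 n t) /\
                    is_derive (fun s => snd (X (S n) s)) t (g2 n t)).
Proof.
  assert (Hder : forall n, (forall t, I t -> continuous (fun s => fst (X n s)) t /\
                                   continuous (fun s => snd (X n s)) t) ->
     (forall t, I t -> is_derive (fun s => fst (X (S n) s)) t (g1 n t) /\
                    is_derive (fun s => snd (X (S n) s)) t (g2 n t))).
  { intros n Hc t Ht.
    assert (Cg1 : forall z, I z -> continuous (g1 n) z).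
    { intros z Hz. destruct (Hc z Hz). apply cont_lin; auto. }
    assert (Cg2 : forall z, I z -> continuous (g2 n) z).
    { intros z Hz. destruct (Hc z Hz). apply cont_lin; auto. }
    split.
    - apply (is_derive_ext (fun s => plus y1 (RInt (g1 n) t0 s))); [intro; reflexivity|].
      replace (g1 n t) with (plus zero (g1 n t)) by (unfold plus, zero; simpl; ring).
      apply (@is_derive_plus R_AbsRing R_NormedModule (fun _ => y1) (fun s => RInt (g1 n) t0 s) t zero (g1 n t)).
      + apply is_derive_const.
      + apply (is_derive_RInt (g1 n) (fun s => RInt (g1 n) t0 s) t0 t); [|apply Cg1; auto].
        apply (I_locally a b t); auto. intros z Hz.
        assert (HH : ex_RInt (g1 n) t0 z).
        { apply (@ex_RInt_continuous R_CompleteNormedModule). intros w Hw. apply Cg1. apply (I_seg a b t0 z); auto. }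
        exact (RInt_correct _ _ _ HH).
    - apply (is_derive_ext (fun s => plus y2 (RInt (g2 n) t0 s))); [intro; reflexivity|].
      replace (g2 n t) with (plus zero (g2 n t)) by (unfold plus, zero; simpl; ring).
      apply (@is_derive_plus R_AbsRing R_NormedModule (fun _ => y2) (fun s => RInt (g2 n) t0 s) t zero (g2 n t)).
      + apply is_derive_const.
      + apply (is_derive_RInt (g2 n) (fun s => RInt (g2 n) t0 s) t0 t); [|apply Cg2; auto].
        apply (I_locally a b t); auto. intros z Hz.
        assert (HH : ex_RInt (g2 n) t0 z).
        { apply (@ex_RInt_continuous R_CompleteNormedModule). intros w Hw. apply Cg2. apply (I_seg a b t0 z); auto. }
        exact (RInt_correct _ _ _ HH). }
  induction n as [|n IH].
  - assert (H0 : forall t, I t -> continuous (fun s => fst (X 0 s)) t /\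
                                   continuous (fun s => snd (X 0 s)) t).
    { intros t _; simpl; split; apply continuous_const. }
    split; [exact H0|apply Hder, H0].
  - destruct IH as [_ IH].
    assert (H0 : forall t, I t -> continuous (fun s => fst (X (S n) s)) t /\
                                   continuous (fun s => snd (X (S n) s)) t).
    { intros t Ht. destruct (IH t Ht) as [D1 D2]. split.
      - apply (ex_derive_continuous (fun s => fst (X (S n) s))). eexists; exact D1.
      - apply (ex_derive_continuous (fun s => snd (X (S n) s))). eexists; exact D2. }
    split; [exact H0|apply Hder, H0].
Qed.

Lemma g1_cont n t : I t -> continuous (g1 n) t.
Proof. intro Ht. destruct (proj1 (X_reg n) t Ht). apply cont_lin; auto. Qed.
Lemma g2_cont n t : I t -> continuous (g2 n) t.
Proof. intro Ht. destruct (proj1 (X_reg n) t Ht). apply cont_lin; auto. Qed.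

Lemma g1_ex n t : I t -> ex_RInt (g1 n) t0 t.
Proof. intro Ht. apply (@ex_RInt_continuous R_CompleteNormedModule). intros w Hw. apply g1_cont. apply (I_seg a b t0 t); auto. Qed.
Lemma g2_ex n t : I t -> ex_RInt (g2 n) t0 t.
Proof. intro Ht. apply (@ex_RInt_continuous R_CompleteNormedModule). intros w Hw. apply g2_cont. apply (I_seg a b t0 t); auto. Qed.

Lemma X_t0 n : X n t0 = (y1, y2).
Proof.
  destruct n; simpl; [reflexivity|]. rewrite !RInt_point. unfold zero; simpl. f_equal; ring.
Qed.


Lemma lin_bound (x1 x2 k1 k2 L : R) : Rabs k1 <= L -> Rabs k2 <= L ->
  Rabs (x1 * k1 + x2 * k2) <= L * (Rabs x1 + Rabs x2).
Proof.
  intros H1 H2. eapply Rle_trans; [apply Rabs_triang|]. rewrite !Rabs_mult.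
  pose proof (Rabs_pos x1). pose proof (Rabs_pos x2). nra.
Qed.

Section Bounds.
Variables (al be L : R).
Hypothesis Hab : al <= t0 <= be.
Hypothesis Hsub : forall s, al <= s <= be -> I s.
Hypothesis HL : forall s, al <= s <= be ->
  Rabs (c11 s) <= L /\ Rabs (c12 s) <= L /\ Rabs (c21 s) <= L /\ Rabs (c22 s) <= L.

Let K := Rabs y1 + Rabs y2.

Lemma seg_in t s : al <= t <= be -> Rmin t0 t <= s <= Rmax t0 t -> al <= s <= be.
Proof. intros Ht Hs. unfold Rmin, Rmax in Hs. destruct (Rle_dec t0 t); lra. Qed.

Lemma dbound : forall k t, al <= t <= be ->
  Rabs (fst (X (S k) t) - fst (X k t)) + Rabs (snd (X (S k) t) - snd (X k t)) <=
  K * (2 * L * Rabs (t - t0)) ^ (S k) / INR (fact (S k)).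
Proof.
  induction k as [|k IH]; intros t Ht.
  - rewrite X_S1, X_S2. simpl fst; simpl snd.
    rewrite !Rplus_minus_l.
    assert (B1 : Rabs (RInt (g1 0) t0 t) <= (L * K) * Rabs (t - t0) ^ 1 / INR 1).
    { apply INT; [apply g1_ex; auto|]. intros s Hs. pose proof (seg_in t s Ht Hs) as Hs'.
      destruct (HL s Hs') as [A1 [A2 [A3 A4]]]. unfold g1. simpl. rewrite Rmult_1_r.
      apply lin_bound; auto. }
    assert (B2 : Rabs (RInt (g2 0) t0 t) <= (L * K) * Rabs (t - t0) ^ 1 / INR 1).
    { apply INT; [apply g2_ex; auto|]. intros s Hs. pose proof (seg_in t s Ht Hs) as Hs'.
      destruct (HL s Hs') as [A1 [A2 [A3 A4]]]. unfold g2. simpl. rewrite Rmult_1_r.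
      apply lin_bound; auto. }
    simpl in B1, B2 |- *. lra.
  - rewrite !X_S1, !X_S2.
    assert (E1 : y1 + RInt (g1 (S k)) t0 t - (y1 + RInt (g1 k) t0 t) =
                 RInt (fun s => g1 (S k) s - g1 k s) t0 t).
    { rewrite (RInt_minus (g1 (S k)) (g1 k)); [|apply g1_ex; auto|apply g1_ex; auto].
      unfold minus, plus, opp; simpl. ring. }
    assert (E2 : y2 + RInt (g2 (S k)) t0 t - (y2 + RInt (g2 k) t0 t) =
                 RInt (fun s => g2 (S k) s - g2 k s) t0 t).
    { rewrite (RInt_minus (g2 (S k)) (g2 k)); [|apply g2_ex; auto|apply g2_ex; auto].
      unfold minus, plus, opp; simpl. ring. }
    rewrite E1, E2.
    set (A := L * (K * (2 * L) ^ (S k) / INR (fact (S k)))).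
    assert (Hex1 : ex_RInt (fun s => g1 (S k) s - g1 k s) t0 t).
    { apply (ex_RInt_minus (g1 (S k)) (g1 k)); apply g1_ex; auto. }
    assert (Hex2 : ex_RInt (fun s => g2 (S k) s - g2 k s) t0 t).
    { apply (ex_RInt_minus (g2 (S k)) (g2 k)); apply g2_ex; auto. }
    assert (PW : forall s, al <= s <= be ->
      L * (Rabs (fst (X (S k) s) - fst (X k s)) + Rabs (snd (X (S k) s) - snd (X k s)))
      <= A * Rabs (s - t0) ^ (S k)).
    { intros s Hs. specialize (IH s Hs).
      assert (L0 : 0 <= L) by (destruct (HL s Hs) as [A1 _]; pose proof (Rabs_pos (c11 s)); lra).
      unfold A. rewrite Rpow_mult_distr in IH.
      apply Rle_trans with (L * (K * ((2 * L) ^ S k * Rabs (s - t0) ^ S k) / INR (fact (S k)))).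
      + apply Rmult_le_compat_l; auto.
      + right. field. apply not_0_INR. apply fact_neq_0. }
    assert (B1 : Rabs (RInt (fun s => g1 (S k) s - g1 k s) t0 t) <= A * Rabs (t - t0) ^ (S (S k)) / INR (S (S k))).
    { apply INT; auto. intros s Hs. pose proof (seg_in t s Ht Hs) as Hs'.
      eapply Rle_trans; [|apply PW; auto].
      destruct (HL s Hs') as [A1 [A2 [A3 A4]]]. unfold g1.
      replace (fst (X (S k) s) * c11 s + snd (X (S k) s) * c21 s -
               (fst (X k s) * c11 s + snd (X k s) * c21 s)) with
              ((fst (X (S k) s) - fst (X k s)) * c11 s + (snd (X (S k) s) - snd (X k s)) * c21 s) by ring.
      apply lin_bound; auto. }
    assert (B2 : Rabs (RInt (fun s => g2 (S k) s - g2 k s) t0 t) <= A * Rabs (t - t0) ^ (S (S k)) / INR (S (S k))).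
    { apply INT; auto. intros s Hs. pose proof (seg_in t s Ht Hs) as Hs'.
      eapply Rle_trans; [|apply PW; auto].
      destruct (HL s Hs') as [A1 [A2 [A3 A4]]]. unfold g2.
      replace (fst (X (S k) s) * c12 s + snd (X (S k) s) * c22 s -
               (fst (X k s) * c12 s + snd (X k s) * c22 s)) with
              ((fst (X (S k) s) - fst (X k s)) * c12 s + (snd (X (S k) s) - snd (X k s)) * c22 s) by ring.
      apply lin_bound; auto. }
    eapply Rle_trans; [apply Rplus_le_compat; [exact B1|exact B2]|].
    right. unfold A.
    replace (fact (S (S k))) with (S (S k) * fact (S k))%nat by reflexivity.
    rewrite mult_INR. set (F := INR (fact (S k))). set (N := INR (S (S k))).
    assert (F0 : F <> 0) by (apply not_0_INR, fact_neq_0).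
    assert (N0 : N <> 0) by (apply not_0_INR; lia).
    rewrite !Rpow_mult_distr. simpl pow. field. split; auto.
Qed.


Definition bb (k : nat) := K * (2 * L * (be - al)) ^ (S k) / INR (fact (S k)).

Lemma L_nonneg : 0 <= L.
Proof. destruct (HL t0 Hab) as [A1 _]. pose proof (Rabs_pos (c11 t0)). lra. Qed.
Lemma K_nonneg : 0 <= K.
Proof. unfold K. pose proof (Rabs_pos y1). pose proof (Rabs_pos y2). lra. Qed.

Lemma bb_nonneg k : 0 <= bb k.
Proof.
  unfold bb. pose proof L_nonneg. pose proof K_nonneg.
  apply Rmult_le_pos; [apply Rmult_le_pos; auto; apply pow_le; nra|].
  left. apply Rinv_0_lt_compat, lt_0_INR, lt_O_fact.
Qed.

Lemma dbound_u k t : al <= t <= be ->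
  Rabs (fst (X (S k) t) - fst (X k t)) + Rabs (snd (X (S k) t) - snd (X k t)) <= bb k.
Proof.
  intro Ht. eapply Rle_trans; [apply dbound; auto|]. unfold bb.
  pose proof L_nonneg. pose proof K_nonneg.
  apply Rmult_le_compat_r; [left; apply Rinv_0_lt_compat, lt_0_INR, lt_O_fact|].
  apply Rmult_le_compat_l; auto. apply pow_incr. split.
  - pose proof (Rabs_pos (t - t0)). nra.
  - apply Rmult_le_compat_l; [nra|]. unfold Rabs; destruct (Rcase_abs (t - t0)); lra.
Qed.

Lemma ex_series_bb : ex_series bb.
Proof.
  set (x := 2 * L * (be - al)).
  assert (H : ex_series (fun k => scal (pow_n x k) (/ INR (fact k)))).
  { eexists. apply (is_exp_Reals x). }
  apply ex_series_incr_1 in H.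
  apply (ex_series_scal_l K) in H.
  eapply ex_series_ext; [|exact H]. intro k. unfold bb, scal; simpl. unfold mult; simpl.
  rewrite pow_n_pow. fold x. simpl. unfold Rdiv. ring.
Qed.

Lemma Xdiff n p t : al <= t <= be ->
  Rabs (fst (X (S (n + p)) t) - fst (X n t)) + Rabs (snd (X (S (n + p)) t) - snd (X n t))
  <= sum_n_m bb n (n + p).
Proof.
  intro Ht. induction p as [|p IH].
  - rewrite Nat.add_0_r, sum_n_n. apply dbound_u; auto.
  - rewrite Nat.add_succ_r. rewrite sum_n_Sm by lia.
    pose proof (dbound_u (S (n + p)) t Ht) as D.
    change (plus (sum_n_m bb n (n + p)) (bb (S (n + p)))) with
           (sum_n_m bb n (n + p) + bb (S (n + p))).
    set (u1 := fst (X (S (S (n + p))) t)) in *. set (u2 := snd (X (S (S (n + p))) t)) in *.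
    set (v1 := fst (X (S (n + p)) t)) in *. set (v2 := snd (X (S (n + p)) t)) in *.
    set (w1 := fst (X n t)) in *. set (w2 := snd (X n t)) in *.
    pose proof (Rabs_triang (u1 - v1) (v1 - w1)). pose proof (Rabs_triang (u2 - v2) (v2 - w2)).
    replace (u1 - w1) with ((u1 - v1) + (v1 - w1)) by ring.
    replace (u2 - w2) with ((u2 - v2) + (v2 - w2)) by ring. lra.
Qed.

Lemma sum_nonneg n m : 0 <= sum_n_m bb n m.
Proof.
  eapply Rle_trans; [|apply (sum_n_m_le (fun _ => zero) bb n m)].
  - rewrite sum_n_m_const_zero. unfold zero; simpl; lra.
  - intro k. apply bb_nonneg.
Qed.

Lemma Cauchy_X (eps : posreal) : exists N, forall n m t, al <= t <= be -> (N <= n)%nat -> (N <= m)%nat ->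
  Rabs (fst (X n t) - fst (X m t)) + Rabs (snd (X n t) - snd (X m t)) < eps.
Proof.
  destruct (Cauchy_ex_series bb ex_series_bb eps) as [N HN].
  exists N. intros n m t Ht Hn Hm.
  assert (G : forall n m, (N <= n)%nat -> (n <= m)%nat ->
     Rabs (fst (X m t) - fst (X n t)) + Rabs (snd (X m t) - snd (X n t)) < eps).
  { intros n0 m0 Hn0 Hm0. destruct (Nat.eq_dec n0 m0) as [E|E].
    - subst. rewrite !Rminus_eq_0, Rabs_R0. rewrite Rplus_0_l. apply cond_pos.
    - replace m0 with (S (n0 + (m0 - n0 - 1))) by lia.
      eapply Rle_lt_trans; [apply Xdiff; auto|].
      specialize (HN n0 (n0 + (m0 - n0 - 1))%nat Hn0 ltac:(lia)).
      change (norm (sum_n_m bb n0 (n0 + (m0 - n0 - 1)))) with (Rabs (sum_n_m bb n0 (n0 + (m0 - n0 - 1)))) in HN.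
      rewrite Rabs_right in HN; auto. apply Rle_ge, sum_nonneg. }
  destruct (Nat.le_ge_cases n m) as [L1|L1].
  - rewrite (Rabs_minus_sym (fst (X n t))), (Rabs_minus_sym (snd (X n t))). apply G; auto.
  - apply G; auto.
Qed.


Definition x1f t := real (Lim_seq (fun n => fst (X n t))).
Definition x2f t := real (Lim_seq (fun n => snd (X n t))).

Let DD := fun x => al < x < be.

Lemma DD_open : open DD.
Proof. apply (open_and (fun x => al < x) (fun x => x < be)); [apply open_gt|apply open_lt]. Qed.
Lemma DD_conn : is_connected DD.
Proof. intros u v w Hu Hv Hw. unfold DD in *. lra. Qed.

Lemma CVU1 : CVU_dom (fun n y => fst (X n y)) DD.
Proof.
  apply CVU_dom_cauchy. intro eps. destruct (Cauchy_X eps) as [N HN]. exists N.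
  intros n m x Hx Hn Hm. specialize (HN n m x ltac:(unfold DD in Hx; lra) Hn Hm).
  pose proof (Rabs_pos (snd (X n x) - snd (X m x))). lra.
Qed.
Lemma CVU2 : CVU_dom (fun n y => snd (X n y)) DD.
Proof.
  apply CVU_dom_cauchy. intro eps. destruct (Cauchy_X eps) as [N HN]. exists N.
  intros n m x Hx Hn Hm. specialize (HN n m x ltac:(unfold DD in Hx; lra) Hn Hm).
  pose proof (Rabs_pos (fst (X n x) - fst (X m x))). lra.
Qed.

Lemma DD_I x : DD x -> I x.
Proof. intro H. apply Hsub. unfold DD in H. lra. Qed.

Lemma lim1 t : DD t -> is_lim_seq (fun n => fst (X n t)) (x1f t).
Proof.
  intro Ht. unfold x1f. apply Lim_seq_correct'.
  apply (CVU_CVS_dom _ _ CVU1 t Ht).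
Qed.
Lemma lim2 t : DD t -> is_lim_seq (fun n => snd (X n t)) (x2f t).
Proof.
  intro Ht. unfold x2f. apply Lim_seq_correct'.
  apply (CVU_CVS_dom _ _ CVU2 t Ht).
Qed.

Lemma Derive_X1 n t : I t -> Derive (fun y => fst (X (S n) y)) t = g1 n t.
Proof. intro Ht. apply is_derive_unique. apply (proj2 (X_reg n) t Ht). Qed.
Lemma Derive_X2 n t : I t -> Derive (fun y => snd (X (S n) y)) t = g2 n t.
Proof. intro Ht. apply is_derive_unique. apply (proj2 (X_reg n) t Ht). Qed.

Lemma Derive_X0_1 t : Derive (fun y => fst (X 0 y)) t = 0.
Proof. simpl. apply Derive_const. Qed.
Lemma Derive_X0_2 t : Derive (fun y => snd (X 0 y)) t = 0.
Proof. simpl. apply Derive_const. Qed.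

Lemma cpt_of_cont (f : R -> R) x : continuous f x -> continuity_pt f x.
Proof. intro H. apply continuity_pt_filterlim. exact H. Qed.

Lemma CVU_der (gg : nat -> R -> R) (k1 k2 : R -> R)
  (Hk : forall s, al <= s <= be -> Rabs (k1 s) <= L /\ Rabs (k2 s) <= L)
  (Hg : forall n s, DD s -> gg (S n) s = fst (X n s) * k1 s + snd (X n s) * k2 s) :
  CVU_dom gg DD.
Proof.
  apply CVU_dom_cauchy. intro eps.
  pose proof L_nonneg as L0.
  assert (Hp : 0 < eps / (L + 1)) by (apply Rdiv_lt_0_compat; [apply cond_pos|lra]).
  destruct (Cauchy_X (mkposreal _ Hp)) as [N HN]. exists (S N).
  intros n m x Hx Hn Hm. destruct n as [|n]; [lia|]. destruct m as [|m]; [lia|].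
  rewrite !Hg by auto.
  assert (Hx' : al <= x <= be) by (unfold DD in Hx; lra).
  specialize (HN n m x Hx' ltac:(lia) ltac:(lia)). simpl in HN.
  destruct (Hk x Hx') as [K1 K2].
  replace (fst (X n x) * k1 x + snd (X n x) * k2 x - (fst (X m x) * k1 x + snd (X m x) * k2 x))
    with ((fst (X n x) - fst (X m x)) * k1 x + (snd (X n x) - snd (X m x)) * k2 x) by ring.
  eapply Rle_lt_trans; [apply lin_bound; eauto|].
  apply Rle_lt_trans with (L * (eps / (L + 1))).
  - apply Rmult_le_compat_l; auto. lra.
  - pose proof (cond_pos eps).
    replace (L * (eps / (L + 1))) with ((eps * L) / (L + 1)) by (field; lra).
    apply (Rmult_lt_reg_r (L + 1)); [lra|]. unfold Rdiv.
    rewrite Rmult_assoc, Rinv_l by lra. nra.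
Qed.


Lemma deriv_gen (fn : nat -> R -> R) (gn : nat -> R -> R) (k1 k2 : R -> R) (xf : R -> R) t
  (Hk : forall s, al <= s <= be -> Rabs (k1 s) <= L /\ Rabs (k2 s) <= L)
  (Hcvu : CVU_dom fn DD)
  (Hxf : forall y, xf y = real (Lim_seq (fun n => fn n y)))
  (H0 : forall y, fn 0%nat y = fn 0%nat t)
  (HD : forall n y, I y -> is_derive (fn (S n)) y (gn n y))
  (Hgn : forall n y, gn n y = fst (X n y) * k1 y + snd (X n y) * k2 y)
  (Hgc : forall n y, I y -> continuous (gn n) y) :
  DD t -> is_derive xf t (x1f t * k1 t + x2f t * k2 t).
Proof.
  intro Ht.
  assert (Hex : forall n x, DD x -> ex_derive (fn n) x).
  { intros n x Hx. destruct n as [|n].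
    - apply (ex_derive_ext (fun _ => fn 0%nat t)); [intro y; symmetry; apply H0|].
      apply ex_derive_const.
    - eexists. apply HD. apply DD_I; auto. }
  assert (HDe : forall n y, I y -> Derive (fn (S n)) y = gn n y).
  { intros n y Hy. apply is_derive_unique. apply HD; auto. }
  assert (HD0 : forall y, Derive (fn 0%nat) y = 0).
  { intro y. rewrite (Derive_ext _ (fun _ => fn 0%nat t)) by (intro; apply H0). apply Derive_const. }
  assert (Hcont : forall n x, DD x -> continuity_pt (Derive (fn n)) x).
  { intros n x Hx. destruct n as [|n].
    - apply (continuity_pt_ext (fun _ => 0)); [intro; rewrite HD0; reflexivity|].
      apply cpt_of_cont, continuous_const.
    - apply (continuity_pt_ext_loc (gn n)).
      + apply (I_locally a b x); [apply DD_I; auto|]. intros y Hy. rewrite HDe; auto.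
      + apply cpt_of_cont, Hgc, DD_I; auto. }
  assert (Hcv : CVU_dom (fun n x => Derive (fn n) x) DD).
  { apply (CVU_der _ k1 k2 Hk). intros n s Hs. rewrite HDe; [apply Hgn|apply DD_I; auto]. }
  pose proof (CVU_Derive fn DD DD_open DD_conn Hcvu Hex Hcont Hcv t Ht) as H.
  assert (E : Lim_seq (fun n => Derive (fn n) t) = Finite (x1f t * k1 t + x2f t * k2 t)).
  { rewrite <- Lim_seq_incr_1.
    rewrite (Lim_seq_ext _ (fun n => fst (X n t) * k1 t + snd (X n t) * k2 t)).
    2:{ intro n. rewrite HDe; [apply Hgn|apply DD_I; auto]. }
    apply is_lim_seq_unique. apply is_lim_seq_plus'.
    - apply (is_lim_seq_scal_r (fun n => fst (X n t)) (k1 t) (x1f t)). apply lim1; auto.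
    - apply (is_lim_seq_scal_r (fun n => snd (X n t)) (k2 t) (x2f t)). apply lim2; auto. }
  rewrite E in H. simpl in H.
  eapply is_derive_ext; [|exact H]. intro y. rewrite Hxf. reflexivity.
Qed.

End Bounds.

Lemma below x : I x -> exists al, I al /\ al < x.
Proof.
  intro Hx. destruct (I_ball a b x Hx) as [e He]. exists (x - e / 2). split.
  - apply He. pose proof (cond_pos e). rewrite Rabs_left by lra. lra.
  - pose proof (cond_pos e). lra.
Qed.
Lemma above x : I x -> exists be, I be /\ x < be.
Proof.
  intro Hx. destruct (I_ball a b x Hx) as [e He]. exists (x + e / 2). split.
  - apply He. pose proof (cond_pos e). rewrite Rabs_right by lra. lra.
  - pose proof (cond_pos e). lra.
Qed.

Lemma absmax (cc : R -> R) al be : al <= be -> (forall s, al <= s <= be -> I s) ->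
  (forall t, I t -> continuous cc t) -> exists Lc, forall s, al <= s <= be -> Rabs (cc s) <= Lc.
Proof.
  intros Hab Hs Hc.
  destruct (continuity_ab_maj (fun s => Rabs (cc s)) al be Hab) as [m [Hm _]].
  - intros s Hs'. apply cpt_of_cont. apply (continuous_comp cc Rabs).
    + apply Hc, Hs; auto.
    + apply continuous_Rabs.
  - exists (Rabs (cc m)). exact Hm.
Qed.

Theorem ODE_sol t : I t ->
  is_derive x1f t (x1f t * c11 t + x2f t * c21 t) /\
  is_derive x2f t (x1f t * c12 t + x2f t * c22 t).
Proof.
  intro Ht.
  destruct (below (Rmin t t0)) as [al [Hal Hal']]. { unfold Rmin; destruct (Rle_dec t t0); auto. }
  destruct (above (Rmax t t0)) as [be [Hbe Hbe']]. { unfold Rmax; destruct (Rle_dec t t0); auto. }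
  assert (Hmm : Rmin t t0 <= Rmax t t0) by (unfold Rmin, Rmax; destruct (Rle_dec t t0); lra).
  assert (Hsub : forall s, al <= s <= be -> I s).
  { intros s Hs. apply (I_conv a b al be s Hal Hbe Hs). }
  assert (Hab0 : al <= be) by lra.
  destruct (absmax c11 al be Hab0 Hsub Hc11) as [L1 HL1].
  destruct (absmax c12 al be Hab0 Hsub Hc12) as [L2 HL2].
  destruct (absmax c21 al be Hab0 Hsub Hc21) as [L3 HL3].
  destruct (absmax c22 al be Hab0 Hsub Hc22) as [L4 HL4].
  set (L := Rmax (Rmax L1 L2) (Rmax L3 L4)).
  assert (HL : forall s, al <= s <= be ->
    Rabs (c11 s) <= L /\ Rabs (c12 s) <= L /\ Rabs (c21 s) <= L /\ Rabs (c22 s) <= L).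
  { intros s Hs. unfold L. repeat split.
    - eapply Rle_trans; [apply HL1; auto|]. eapply Rle_trans; [apply Rmax_l|apply Rmax_l].
    - eapply Rle_trans; [apply HL2; auto|]. eapply Rle_trans; [apply Rmax_r|apply Rmax_l].
    - eapply Rle_trans; [apply HL3; auto|]. eapply Rle_trans; [apply Rmax_l|apply Rmax_r].
    - eapply Rle_trans; [apply HL4; auto|]. eapply Rle_trans; [apply Rmax_r|apply Rmax_r]. }
  assert (Hab : al <= t0 <= be).
  { split; [apply Rle_trans with (Rmin t t0); [lra|apply Rmin_r]|
            apply Rle_trans with (Rmax t t0); [apply Rmax_r|lra]]. }
  assert (HDt : al < t < be).
  { split; [apply Rlt_le_trans with (Rmin t t0); [lra|apply Rmin_l]|
            apply Rle_lt_trans with (Rmax t t0); [apply Rmax_l|lra]]. }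
  split.
  - apply (deriv_gen al be L Hab Hsub HL (fun n y => fst (X n y)) g1 c11 c21 x1f t).
    + intros s Hs. destruct (HL s Hs) as [A1 [A2 [A3 A4]]]. auto.
    + apply (CVU1 al be L Hab Hsub HL).
    + intro; reflexivity.
    + intro; reflexivity.
    + intros n y Hy. apply (proj2 (X_reg n) y Hy).
    + intros; reflexivity.
    + intros n y Hy. apply g1_cont; auto.
    + exact HDt.
  - apply (deriv_gen al be L Hab Hsub HL (fun n y => snd (X n y)) g2 c12 c22 x2f t).
    + intros s Hs. destruct (HL s Hs) as [A1 [A2 [A3 A4]]]. auto.
    + apply (CVU2 al be L Hab Hsub HL).
    + intro; reflexivity.
    + intro; reflexivity.
    + intros n y Hy. apply (proj2 (X_reg n) y Hy).
    + intros; reflexivity.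
    + intros n y Hy. apply g2_cont; auto.
    + exact HDt.
Qed.

Lemma x1f_t0 : x1f t0 = y1.
Proof. unfold x1f. rewrite (Lim_seq_ext _ (fun _ => y1)). rewrite Lim_seq_const. reflexivity.
  intro n. rewrite X_t0. reflexivity. Qed.
Lemma x2f_t0 : x2f t0 = y2.
Proof. unfold x2f. rewrite (Lim_seq_ext _ (fun _ => y2)). rewrite Lim_seq_const. reflexivity.
  intro n. rewrite X_t0. reflexivity. Qed.

End ODE.

Definition mid := mkM 1 0 0 1.

Ltac mdes := repeat match goal with
  | A : Mat2 |- _ => destruct A
  end; unfold mmul, madd, mscale, minv, mdet, mtr, mid, mzero, ip, ip4, coords in *; simpl in *.

Lemma mat_eq (A B : Mat2) : m11 A = m11 B -> m12 A = m12 B -> m21 A = m21 B -> m22 A = m22 B -> A = B.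
Proof. destruct A, B; simpl; intros; subst; reflexivity. Qed.

Lemma mmul_assoc A B C : mmul (mmul A B) C = mmul A (mmul B C).
Proof. apply mat_eq; mdes; ring. Qed.
Lemma mmul_1_l A : mmul mid A = A.
Proof. apply mat_eq; mdes; ring. Qed.
Lemma mmul_1_r A : mmul A mid = A.
Proof. apply mat_eq; mdes; ring. Qed.
Lemma mtr_mmul A B : mtr (mmul A B) = mmul (mtr B) (mtr A).
Proof. apply mat_eq; mdes; ring. Qed.
Lemma mdet_mtr A : mdet (mtr A) = mdet A.
Proof. mdes; ring. Qed.
Lemma minv_l A : mdet A = 1 -> mmul (minv A) A = mid.
Proof. intro H. unfold minv. rewrite H, Rinv_1. apply mat_eq; mdes; nra. Qed.
Lemma minv_r A : mdet A = 1 -> mmul A (minv A) = mid.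
Proof. intro H. unfold minv. rewrite H, Rinv_1. apply mat_eq; mdes; nra. Qed.
Lemma mdet_minv A : mdet A = 1 -> mdet (minv A) = 1.
Proof. intro H. unfold minv. rewrite H, Rinv_1. mdes. nra. Qed.
Lemma mmul_scale_r A c B : mmul A (mscale c B) = mscale c (mmul A B).
Proof. apply mat_eq; mdes; ring. Qed.
Lemma mmul_scale_l A c B : mmul (mscale c A) B = mscale c (mmul A B).
Proof. apply mat_eq; mdes; ring. Qed.

Lemma ip_inv P R X Y : ip (mmul P (mmul X R)) (mmul P (mmul Y R)) = mdet P * mdet R * ip X Y.
Proof. mdes. field. Qed.

Lemma solve_left A B C : mdet A = 1 -> mmul (minv A) B = C -> B = mmul A C.
Proof.
  intros H E. subst C. rewrite <- mmul_assoc, minv_r, mmul_1_l; auto.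
Qed.
Lemma solve_right D Q C : mdet Q = 1 -> mmul D Q = C -> D = mmul C (minv Q).
Proof.
  intros H E. subst C. rewrite mmul_assoc, minv_r, mmul_1_r; auto.
Qed.

Section MatSol.
Variables (a b : Rbar) (f q : R -> R).
Let I := rbar_open_interval a b.
Hypothesis Hf : smooth1 I f.
Hypothesis Hq : smooth1 I q.

Let c11 := fun t => f t * q t.
Let c12 := fun t => f t * - q t ^ 2.
Let c21 := fun t => f t * 1.
Let c22 := fun t => f t * - q t.

Lemma sm_c11 : smooth1 I c11. Proof. apply sm1_mult; auto. Qed.
Lemma sm_c12 : smooth1 I c12.
Proof. apply sm1_mult; auto. apply sm1_opp. simpl.
  apply sm1_mult; auto. apply sm1_mult; auto. apply sm1_const. Qed.
Lemma sm_c21 : smooth1 I c21. Proof. apply sm1_mult; auto. apply sm1_const. Qed.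
Lemma sm_c22 : smooth1 I c22. Proof. apply sm1_mult; auto. apply sm1_opp; auto. Qed.

Lemma cont_sm h t : smooth1 I h -> I t -> continuous h t.
Proof. intros H Ht. exact (@ex_derive_continuous R_AbsRing R_NormedModule h t (sm1_ex_derive a b h t H Ht)). Qed.

Lemma row_smooth (x1 x2 : R -> R) :
  (forall t, I t -> is_derive x1 t (x1 t * c11 t + x2 t * c21 t) /\
                    is_derive x2 t (x1 t * c12 t + x2 t * c22 t)) ->
  smooth1 I x1 /\ smooth1 I x2.
Proof.
  intro HD.
  assert (G : forall n, Sm1 a b n x1 /\ Sm1 a b n x2).
  { induction n as [|n [IH1 IH2]]; [simpl; tauto|]. simpl. split; split.
    - intros t Ht. eexists. apply (HD t Ht).
    - eapply Sm1_ext; [|apply Sm1_plus; [apply Sm1_mult; [exact IH1|apply smooth_Sm1, sm_c11]|apply Sm1_mult; [exact IH2|apply smooth_Sm1, sm_c21]]].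
      intros t Ht. symmetry. apply is_derive_unique. apply (HD t Ht).
    - intros t Ht. eexists. apply (HD t Ht).
    - eapply Sm1_ext; [|apply Sm1_plus; [apply Sm1_mult; [exact IH1|apply smooth_Sm1, sm_c12]|apply Sm1_mult; [exact IH2|apply smooth_Sm1, sm_c22]]].
      intros t Ht. symmetry. apply is_derive_unique. apply (HD t Ht). }
  split; apply Sm1_smooth; intro n; apply G.
Qed.

Lemma mat_sol : exists F : R -> Mat2, msmooth1 I F /\
  forall u, I u -> inSL2 (F u) /\ mmul (minv (F u)) (mderiv F u) = mscale (f u) (Aq (q u)).
Proof.
  destruct (classic (exists t0, I t0)) as [[t0 Ht0]|Hn].
  2:{ exists (fun _ => mid). split.
      - repeat split; intros n x Hx; exfalso; apply Hn; eauto.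
      - intros u Hu; exfalso; apply Hn; eauto. }
  assert (C11 : forall t, I t -> continuous c11 t) by (intros; apply cont_sm; auto; apply sm_c11).
  assert (C12 : forall t, I t -> continuous c12 t) by (intros; apply cont_sm; auto; apply sm_c12).
  assert (C21 : forall t, I t -> continuous c21 t) by (intros; apply cont_sm; auto; apply sm_c21).
  assert (C22 : forall t, I t -> continuous c22 t) by (intros; apply cont_sm; auto; apply sm_c22).
  pose proof (ODE_sol a b c11 c12 c21 c22 t0 1 0 Ht0 C11 C12 C21 C22) as S1.
  pose proof (ODE_sol a b c11 c12 c21 c22 t0 0 1 Ht0 C11 C12 C21 C22) as S2.
  pose proof (x1f_t0 c11 c12 c21 c22 t0 1 0) as E11.
  pose proof (x2f_t0 c11 c12 c21 c22 t0 1 0) as E12.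
  pose proof (x1f_t0 c11 c12 c21 c22 t0 0 1) as E21.
  pose proof (x2f_t0 c11 c12 c21 c22 t0 0 1) as E22.
  set (x1 := x1f c11 c12 c21 c22 t0 1 0) in *.
  set (x2 := x2f c11 c12 c21 c22 t0 1 0) in *.
  set (w1 := x1f c11 c12 c21 c22 t0 0 1) in *.
  set (w2 := x2f c11 c12 c21 c22 t0 0 1) in *.
  destruct (row_smooth x1 x2 S1) as [Sx1 Sx2].
  destruct (row_smooth w1 w2 S2) as [Sw1 Sw2].
  exists (fun t => mkM (x1 t) (x2 t) (w1 t) (w2 t)). split.
  - repeat split; assumption.
  - assert (Hdet : forall t, I t -> x1 t * w2 t - x2 t * w1 t = 1).
    { intros t Ht.
      pose (D := fun s => x1 s * w2 s - x2 s * w1 s).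
      assert (HD : forall s, I s -> is_derive D s 0).
      { intros s Hs. destruct (S1 s Hs) as [D1 D2]. destruct (S2 s Hs) as [D3 D4].
        assert (Ex : ex_derive D s).
        { unfold D. apply (ex_derive_minus (fun s => x1 s * w2 s) (fun s => x2 s * w1 s));
          apply ex_derive_mult; eexists; eauto. }
        replace 0 with (Derive D s); [apply Derive_correct; exact Ex|].
        unfold D. rewrite Derive_minus by (apply ex_derive_mult; eexists; eauto).
        rewrite !Derive_mult by (eexists; eauto).
        rewrite (is_derive_unique _ _ _ D1), (is_derive_unique _ _ _ D2),
              (is_derive_unique _ _ _ D3), (is_derive_unique _ _ _ D4).
        unfold c11, c12, c21, c22. ring. }
      assert (D0 : D t0 = 1) by (unfold D; rewrite E11, E12, E21, E22; ring).
      assert (M1 : forall x, Rmin t0 t < x < Rmax t0 t -> is_derive D x 0).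
      { intros x Hx. apply HD. apply (I_seg a b t0 t); auto. lra. }
      assert (M2 : forall x, Rmin t0 t <= x <= Rmax t0 t -> continuity_pt D x).
      { intros x Hx. apply cpt_of_cont. apply (@ex_derive_continuous R_AbsRing R_NormedModule D).
        eexists. apply HD. apply (I_seg a b t0 t); auto. }
      destruct (MVT_gen D t0 t (fun _ => 0) M1 M2) as [cc [_ Hcc]].
      change (D t = 1). lra. }
    intros u Hu. split.
    + unfold inSL2, mdet. simpl. apply Hdet; auto.
    + destruct (S1 u Hu) as [D1 D2]. destruct (S2 u Hu) as [D3 D4].
      unfold mderiv. simpl.
      change (Derive (fun t => x1 t) u) with (Derive x1 u).
      change (Derive (fun t => x2 t) u) with (Derive x2 u).
      change (Derive (fun t => w1 t) u) with (Derive w1 u).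
      change (Derive (fun t => w2 t) u) with (Derive w2 u).
      rewrite (is_derive_unique _ _ _ D1), (is_derive_unique _ _ _ D2),
              (is_derive_unique _ _ _ D3), (is_derive_unique _ _ _ D4).
      pose proof (Hdet u Hu) as Hd.
      set (P := mkM (x1 u) (x2 u) (w1 u) (w2 u)).
      assert (E : mkM (x1 u * c11 u + x2 u * c21 u) (x1 u * c12 u + x2 u * c22 u)
                      (w1 u * c11 u + w2 u * c21 u) (w1 u * c12 u + w2 u * c22 u) =
                  mmul P (mscale (f u) (Aq (q u)))).
      { apply mat_eq; unfold P, c11, c12, c21, c22; simpl; ring. }
      rewrite E, <- mmul_assoc, minv_l, mmul_1_l; auto.
Qed.
End MatSol.

Definition Kn (q r : R) := mscale (/ (1 + q * r)) (mkM (q * r - 1) (2 * q) (2 * r) (1 - q * r)).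

Lemma pz_split f g q r : f * g * (1 + q * r) ^ 2 <> 0 -> f <> 0 /\ g <> 0 /\ 1 + q * r <> 0.
Proof.
  intro H. repeat split; intro E; apply H; rewrite E; ring.
Qed.

Lemma sandwich P R Z : mdet P = 1 -> mdet R = 1 -> mmul P (mmul Z R) = mzero -> Z = mzero.
Proof.
  intros HP HR E.
  assert (Z = mmul (minv P) (mmul (mmul P (mmul Z R)) (minv R))).
  { rewrite <- !mmul_assoc, minv_l, mmul_1_l by auto. rewrite mmul_assoc, minv_r, mmul_1_r by auto.
    reflexivity. }
  rewrite H, E. apply mat_eq; mdes; ring.
Qed.

Lemma indep_core P R f q g r : mdet P = 1 -> mdet R = 1 -> f * g * (1 + q * r) ^ 2 <> 0 ->
  lin_indep2 (mmul P (mmul (mscale f (Aq q)) R)) (mmul P (mmul (mscale g (Br r)) R)).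
Proof.
  intros HP HR Hz. destruct (pz_split f g q r Hz) as [Hf [Hg Hqr]].
  intros al be E.
  assert (E2 : mmul P (mmul (madd (mscale al (mscale f (Aq q))) (mscale be (mscale g (Br r)))) R) = mzero).
  { rewrite <- E. apply mat_eq; mdes; ring. }
  apply sandwich in E2; auto.
  unfold madd, mscale, Aq, Br, mzero in E2. simpl in E2. injection E2. intros E22 E21 E12 E11.
  assert (HB2 : be * g = (al * f) * q ^ 2).
  { apply Rminus_diag_uniq. rewrite <- E12. ring. }
  assert (H1 : (al * f) * q * (1 + q * r) = 0).
  { replace ((al * f) * q * (1 + q * r)) with ((al * f) * q + ((al * f) * q ^ 2) * r) by ring.
    rewrite <- HB2. rewrite <- E11. ring. }
  set (A0 := al * f) in *. set (B0 := be * g) in *.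
  apply Rmult_integral in H1. destruct H1 as [H1|H1]; [|contradiction].
  assert (HB : B0 = 0).
  { rewrite HB2. replace (A0 * q ^ 2) with ((A0 * q) * q) by ring. rewrite H1. ring. }
  assert (HA : A0 = 0).
  { transitivity (al * (f * 1) + be * (g * - (r * (r * 1))) + B0 * (r * r)).
    - unfold A0, B0. ring.
    - rewrite E21, HB. ring. }
  unfold A0, B0 in HA, HB. split.
  + apply Rmult_integral in HA. destruct HA; [auto|contradiction].
  + apply Rmult_integral in HB. destruct HB; [auto|contradiction].
Qed.

Lemma core P R f q g r : mdet P = 1 -> mdet R = 1 -> f * g * (1 + q * r) ^ 2 <> 0 ->
  let X := mscale f (Aq q) in let Y := mscale g (Br r) in let K := Kn q r in
  inH31 (mmul P (mmul mid R)) /\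
  lin_indep2 (mmul P (mmul X R)) (mmul P (mmul Y R)) /\
  ip (mmul P (mmul X R)) (mmul P (mmul X R)) = 0 /\
  ip (mmul P (mmul Y R)) (mmul P (mmul Y R)) = 0 /\
  2 * ip (mmul P (mmul X R)) (mmul P (mmul Y R)) = (1 + q * r) ^ 2 * f * g /\
  ip (mmul P (mmul K R)) (mmul P (mmul K R)) = 1 /\
  ip (mmul P (mmul K R)) (mmul P (mmul mid R)) = 0 /\
  ip (mmul P (mmul K R)) (mmul P (mmul X R)) = 0 /\
  ip (mmul P (mmul K R)) (mmul P (mmul Y R)) = 0 /\
  ip (mmul P (mmul (mmul X Y) R)) (mmul P (mmul K R)) = (1 + q * r) ^ 2 * f * g / 2.
Proof.
  intros HP HR Hz X Y K. destruct (pz_split f g q r Hz) as [Hf [Hg Hqr]].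
  split; [|split; [apply indep_core; auto|]].
  { unfold inH31. rewrite !ip_inv, HP, HR. mdes. field. }
  rewrite !ip_inv, HP, HR.
  unfold X, Y, K, Kn. repeat split.
  - mdes. field.
  - mdes. field.
  - mdes. field.
  - mdes. field. auto.
  - mdes. field. auto.
  - mdes. field. auto.
  - mdes. field. auto.
  - mdes. field. auto.
Qed.

Definition ex_md (F : R -> Mat2) x := ex_derive (fun t => m11 (F t)) x /\
  ex_derive (fun t => m12 (F t)) x /\ ex_derive (fun t => m21 (F t)) x /\ ex_derive (fun t => m22 (F t)) x.

Lemma mderiv_ext F G x : (forall t, F t = G t) -> mderiv F x = mderiv G x.
Proof.
  intro H. unfold mderiv. apply mat_eq; simpl; apply Derive_ext; intro t; rewrite H; reflexivity.
Qed.

Lemma D_lin (a0 b0 : R -> R) c0 d0 x : ex_derive a0 x -> ex_derive b0 x ->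
  Derive (fun s => a0 s * c0 + b0 s * d0) x = Derive a0 x * c0 + Derive b0 x * d0.
Proof.
  intros Ha Hb. rewrite Derive_plus.
  - rewrite !Derive_mult; try assumption; try apply ex_derive_const.
    rewrite !Derive_const. ring.
  - apply ex_derive_mult; auto; apply ex_derive_const.
  - apply ex_derive_mult; auto; apply ex_derive_const.
Qed.
Lemma D_lin_l (a0 b0 : R -> R) c0 d0 x : ex_derive a0 x -> ex_derive b0 x ->
  Derive (fun s => c0 * a0 s + d0 * b0 s) x = c0 * Derive a0 x + d0 * Derive b0 x.
Proof.
  intros Ha Hb. rewrite (Derive_ext _ (fun s => a0 s * c0 + b0 s * d0)) by (intro; ring).
  rewrite D_lin; auto. ring.
Qed.

Lemma md_const_r F C x : ex_md F x -> mderiv (fun s => mmul (F s) C) x = mmul (mderiv F x) C.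
Proof.
  intros [H1 [H2 [H3 H4]]]. unfold mderiv, mmul. apply mat_eq; simpl; apply D_lin; auto.
Qed.
Lemma md_const_l C G x : ex_md G x -> mderiv (fun s => mmul C (G s)) x = mmul C (mderiv G x).
Proof.
  intros [H1 [H2 [H3 H4]]]. unfold mderiv, mmul. apply mat_eq; simpl; apply D_lin_l; auto.
Qed.

Lemma ex_md_tr F x : ex_md F x -> ex_md (fun t => mtr (F t)) x.
Proof. intros [H1 [H2 [H3 H4]]]. repeat split; simpl; auto. Qed.

Lemma ex_md_inv F x : ex_md F x -> mdet (F x) = 1 -> ex_md (fun t => minv (F t)) x.
Proof.
  intros [H1 [H2 [H3 H4]]] Hd.
  assert (Hdet : ex_derive (fun t => mdet (F t)) x).
  { unfold mdet. apply (ex_derive_minus (fun t => m11 (F t) * m22 (F t)) (fun t => m12 (F t) * m21 (F t)));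
    apply ex_derive_mult; auto. }
  assert (Hi : ex_derive (fun t => / mdet (F t)) x).
  { apply (ex_derive_inv (fun t => mdet (F t))); auto. rewrite Hd. lra. }
  unfold minv, mscale. repeat split; simpl.
  - apply (ex_derive_mult (fun t => / mdet (F t)) (fun t => m22 (F t))); auto.
  - apply (ex_derive_mult (fun t => / mdet (F t)) (fun t => - m12 (F t))); auto.
    apply (ex_derive_opp (fun t => m12 (F t))); auto.
  - apply (ex_derive_mult (fun t => / mdet (F t)) (fun t => - m21 (F t))); auto.
    apply (ex_derive_opp (fun t => m21 (F t))); auto.
  - apply (ex_derive_mult (fun t => / mdet (F t)) (fun t => m11 (F t))); auto.
Qed.

Lemma ex_md_sm (a b : Rbar) F x : msmooth1 (rbar_open_interval a b) F -> rbar_open_interval a b x -> ex_md F x.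
Proof.
  intros [S1 [S2 [S3 S4]]] Hx. repeat split; eapply sm1_ex_derive; eauto.
Qed.

Lemma mtr_scale_Aq g r : mtr (mscale g (Aq r)) = mscale g (Br r).
Proof. apply mat_eq; simpl; ring. Qed.

Lemma forms_i (F1 F2 : R -> Mat2) (X Y : Mat2) u v :
  ex_md F1 u -> ex_md F2 v -> mdet (F1 u) = 1 -> mdet (F2 v) = 1 ->
  mmul (minv (F1 u)) (mderiv F1 u) = X ->
  mmul (minv (F2 v)) (mderiv F2 v) = mtr Y ->
  let phi := fun u v => mmul (F1 u) (mtr (F2 v)) in
  phi u v = mmul (F1 u) (mmul mid (mtr (F2 v))) /\
  d_u phi u v = mmul (F1 u) (mmul X (mtr (F2 v))) /\
  d_v phi u v = mmul (F1 u) (mmul Y (mtr (F2 v))) /\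
  d_v (d_u phi) u v = mmul (F1 u) (mmul (mmul X Y) (mtr (F2 v))).
Proof.
  intros E1 E2 D1 D2 H1 H2 phi.
  apply solve_left in H1; auto. apply solve_left in H2; auto.
  assert (Hdu : forall t, d_u phi u t = mmul (mderiv F1 u) (mtr (F2 t))).
  { intro t. unfold d_u, phi. apply md_const_r; auto. }
  assert (Hdv : d_v phi u v = mmul (F1 u) (mtr (mderiv F2 v))).
  { unfold d_v, phi. rewrite md_const_l by (apply ex_md_tr; auto). reflexivity. }
  assert (Ytr : mtr (mtr Y) = Y) by (apply mat_eq; reflexivity).
  split; [|split; [|split]].
  - unfold phi. rewrite mmul_1_l. reflexivity.
  - rewrite Hdu, H1, mmul_assoc. reflexivity.
  - rewrite Hdv, H2, mtr_mmul, Ytr. reflexivity.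
  - unfold d_v at 1. rewrite (mderiv_ext _ _ _ Hdu).
    rewrite md_const_l by (apply ex_md_tr; auto).
    change (mderiv (fun t => mtr (F2 t)) v) with (mtr (mderiv F2 v)).
    rewrite H1, H2, mtr_mmul, Ytr, !mmul_assoc. reflexivity.
Qed.

Lemma forms_ii (F1 F2 : R -> Mat2) (X Y : Mat2) u v :
  ex_md F1 u -> ex_md F2 v -> mdet (F1 u) = 1 -> mdet (F2 v) = 1 ->
  mmul (minv (F1 u)) (mderiv F1 u) = X ->
  mmul (mderiv (fun t => minv (F2 t)) v) (F2 v) = Y ->
  let psi := fun u v => mmul (F1 u) (minv (F2 v)) in
  psi u v = mmul (F1 u) (mmul mid (minv (F2 v))) /\
  d_u psi u v = mmul (F1 u) (mmul X (minv (F2 v))) /\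
  d_v psi u v = mmul (F1 u) (mmul Y (minv (F2 v))) /\
  d_v (d_u psi) u v = mmul (F1 u) (mmul (mmul X Y) (minv (F2 v))).
Proof.
  intros E1 E2 D1 D2 H1 H2 psi.
  apply solve_left in H1; auto. apply solve_right in H2; auto.
  assert (Hdu : forall t, d_u psi u t = mmul (mderiv F1 u) (minv (F2 t))).
  { intro t. unfold d_u, psi. apply md_const_r; auto. }
  assert (Hdv : d_v psi u v = mmul (F1 u) (mderiv (fun t => minv (F2 t)) v)).
  { unfold d_v, psi. rewrite md_const_l by (apply ex_md_inv; auto). reflexivity. }
  split; [|split; [|split]].
  - unfold psi. rewrite mmul_1_l. reflexivity.
  - rewrite Hdu, H1, mmul_assoc. reflexivity.
  - rewrite Hdv, H2. reflexivity.
  - unfold d_v at 1. rewrite (mderiv_ext _ _ _ Hdu).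
    rewrite md_const_l by (apply ex_md_inv; auto).
    rewrite H1, H2, !mmul_assoc. reflexivity.
Qed.

Ltac sm2_tac := repeat first [ apply Sm2_const | apply Sm2_plus | apply Sm2_minus | apply Sm2_mult
  | apply Sm2_opp | apply Sm2_inv | apply Sm2_lift_u | apply Sm2_lift_v | (apply smooth_Sm1; assumption) ].

Lemma minv_minv A : mdet A = 1 -> minv (minv A) = A.
Proof.
  intro H. pose proof (mdet_minv A H) as H'. unfold minv at 1. rewrite H', Rinv_1.
  unfold minv. rewrite H, Rinv_1. apply mat_eq; simpl; ring.
Qed.

Lemma mderiv_ext_loc F G x : locally x (fun t => F t = G t) -> mderiv F x = mderiv G x.
Proof.
  intro H. unfold mderiv. apply mat_eq; simpl; apply Derive_ext_loc;
  eapply filter_imp; try exact H; intros t Ht; simpl; rewrite Ht; reflexivity.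
Qed.

Lemma mat_sol2 (c d : Rbar) (g r : R -> R) :
  smooth1 (rbar_open_interval c d) g -> smooth1 (rbar_open_interval c d) r ->
  exists F2 : R -> Mat2, msmooth1 (rbar_open_interval c d) F2 /\
    forall v, rbar_open_interval c d v -> inSL2 (F2 v) /\
      mmul (mderiv (fun t => minv (F2 t)) v) (F2 v) = mscale (g v) (Br (r v)).
Proof.
  intros Hg Hr. destruct (mat_sol c d g r Hg Hr) as [H [[S1 [S2 [S3 S4]]] HH]].
  exists (fun t => minv (mtr (H t))). split.
  - assert (E : forall t, rbar_open_interval c d t -> minv (mtr (H t)) = mkM (m22 (H t)) (- m21 (H t)) (- m12 (H t)) (m11 (H t))).
    { intros t Ht. destruct (HH t Ht) as [D _]. unfold minv. rewrite mdet_mtr. unfold inSL2 in D. rewrite D, Rinv_1.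
      apply mat_eq; simpl; ring. }
    repeat split.
    + eapply sm1_ext; [|exact S4]. intros t Ht. rewrite E; auto.
    + eapply sm1_ext; [|apply sm1_opp; exact S3]. intros t Ht. rewrite E; auto.
    + eapply sm1_ext; [|apply sm1_opp; exact S2]. intros t Ht. rewrite E; auto.
    + eapply sm1_ext; [|exact S1]. intros t Ht. rewrite E; auto.
  - intros v Hv. destruct (HH v Hv) as [D Hd]. unfold inSL2 in *.
    split; [rewrite mdet_minv; auto; rewrite mdet_mtr; auto|].
    assert (E : mderiv (fun t => minv (minv (mtr (H t)))) v = mtr (mderiv H v)).
    { transitivity (mderiv (fun t => mtr (H t)) v); [|reflexivity].
      apply mderiv_ext_loc. apply (I_locally c d v); auto. intros t Ht.
      destruct (HH t Ht) as [Dt _]. apply minv_minv. rewrite mdet_mtr. exact Dt. }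
    rewrite E. apply solve_left in Hd; auto.
    rewrite Hd, mtr_mmul, mtr_scale_Aq, mmul_assoc, minv_r, mmul_1_r; auto.
    rewrite mdet_mtr; auto.
Qed.

Theorem mainTheorem8 (a b c d : Rbar) (q f r g : R -> R) :
  let I := rbar_open_interval a b in
  let J := rbar_open_interval c d in
  let M := fun u v => I u /\ J v in
  smooth1 I q -> smooth1 I f -> smooth1 J r -> smooth1 J g ->
  (forall u v, M u v -> f u * g v * (1 + q u * r v) ^ 2 <> 0) ->
  let lam := fun u v => (1 + q u * r v) ^ 2 * f u * g v in
  let sol1 := fun F1 : R -> Mat2 =>
    msmooth1 I F1 /\
    forall u, I u -> inSL2 (F1 u) /\
      mmul (minv (F1 u)) (mderiv F1 u) = mscale (f u) (Aq (q u)) in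
  (* (i) *)
  ((exists F1 F2 : R -> Mat2, sol1 F1 /\ msmooth1 J F2 /\
      forall v, J v -> inSL2 (F2 v) /\
        mmul (minv (F2 v)) (mderiv F2 v) = mscale (g v) (Aq (r v))) /\
   (forall F1 F2 : R -> Mat2, sol1 F1 -> msmooth1 J F2 ->
      (forall v, J v -> inSL2 (F2 v) /\
        mmul (minv (F2 v)) (mderiv F2 v) = mscale (g v) (Aq (r v))) ->
      let phi := fun u v => mmul (F1 u) (mtr (F2 v)) in
      conformal_timelike_immersion M phi /\ cmc_pm1 M phi /\
      metric_conformal_to M phi lam)) /\
  (* (ii) *)
  ((exists F1 F2 : R -> Mat2, sol1 F1 /\ msmooth1 J F2 /\
      forall v, J v -> inSL2 (F2 v) /\
        mmul (mderiv (fun t => minv (F2 t)) v) (F2 v) = mscale (g v) (Br (r v))) /\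
   (forall F1 F2 : R -> Mat2, sol1 F1 -> msmooth1 J F2 ->
      (forall v, J v -> inSL2 (F2 v) /\
        mmul (mderiv (fun t => minv (F2 t)) v) (F2 v) = mscale (g v) (Br (r v))) ->
      let psi := fun u v => mmul (F1 u) (minv (F2 v)) in
      conformal_timelike_immersion M psi /\ cmc_pm1 M psi /\
      metric_conformal_to M psi lam)).
Proof.
  intros I J M Hq Hf Hr Hg Hnz lam sol1.
  assert (NZ : forall u v, M u v -> 1 + q u * r v <> 0).
  { intros u v Hm. destruct (pz_split _ _ _ _ (Hnz u v Hm)) as [_ [_ H]]. exact H. }
  split; split.
  - destruct (mat_sol a b f q Hf Hq) as [F1 HF1]. destruct (mat_sol c d g r Hg Hr) as [F2 [HS2 HF2]].
    exists F1, F2. split; [exact HF1|split; assumption].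
  - intros F1 F2 [S1 H1] S2 H2 phi.
    set (N := fun u v => mmul (F1 u) (mmul (Kn (q u) (r v)) (mtr (F2 v)))).
    assert (KEY : forall u v, M u v ->
      let X := mscale (f u) (Aq (q u)) in let Y := mscale (g v) (Br (r v)) in
      let P := F1 u in let R := mtr (F2 v) in
      phi u v = mmul P (mmul mid R) /\ d_u phi u v = mmul P (mmul X R) /\
      d_v phi u v = mmul P (mmul Y R) /\ d_v (d_u phi) u v = mmul P (mmul (mmul X Y) R) /\
      mdet P = 1 /\ mdet R = 1).
    { intros u v [Hu Hv] X Y P R.
      destruct (H1 u Hu) as [D1 E1]. destruct (H2 v Hv) as [D2 E2].
      assert (Tr : mtr (mscale (g v) (Br (r v))) = mscale (g v) (Aq (r v))) by (apply mat_eq; simpl; ring).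
      rewrite <- Tr in E2.
      pose proof (forms_i F1 F2 X Y u v
         (ex_md_sm a b F1 u S1 Hu) (ex_md_sm c d F2 v S2 Hv) D1 D2 E1 E2) as FF.
      fold phi in FF.
      destruct FF as [A1 [A2 [A3 A4]]]. repeat split; auto. unfold R. rewrite mdet_mtr; auto. }
    destruct S1 as [S1a [S1b [S1c S1d]]]. destruct S2 as [S2a [S2b [S2c S2d]]].
    split; [|split].
    + split.
      * refine (conj _ (conj _ (conj _ _))); apply (Sm2_smooth a b c d); intro n; unfold phi, mmul, mtr; simpl; sm2_tac.
      * intros u v Hm. destruct (KEY u v Hm) as [A1 [A2 [A3 [A4 [A5 A6]]]]].
        pose proof (core _ _ _ _ _ _ A5 A6 (Hnz u v Hm)) as CC. cbv zeta in CC.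
        destruct CC as [C1 [C2 [C3 [C4 [C5 _]]]]].
        rewrite A1, A2, A3. refine (conj C1 (conj C2 (conj C3 (conj C4 _)))).
        intro E. rewrite E in C5. apply (Hnz u v Hm).
        replace (f u * g v * (1 + q u * r v) ^ 2) with ((1 + q u * r v) ^ 2 * f u * g v) by ring. rewrite <- C5. ring.
    + exists N. split.
      * split.
        -- refine (conj _ (conj _ (conj _ _))); apply (Sm2_smooth a b c d); intro n;
           unfold N, Kn, mmul, mtr, mscale; simpl; sm2_tac; intros u0 v0 Hm; apply NZ; exact Hm.
        -- intros u v Hm. destruct (KEY u v Hm) as [A1 [A2 [A3 [A4 [A5 A6]]]]].
           pose proof (core _ _ _ _ _ _ A5 A6 (Hnz u v Hm)) as CC. cbv zeta in CC.
           destruct CC as [_ [_ [_ [_ [C5 [C6 [C7 [C8 [C9 C10]]]]]]]]].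
           rewrite A1, A2, A3. exact (conj C6 (conj C7 (conj C8 C9))).
      * left. intros u v Hm. destruct (KEY u v Hm) as [A1 [A2 [A3 [A4 [A5 A6]]]]].
        pose proof (core _ _ _ _ _ _ A5 A6 (Hnz u v Hm)) as CC. cbv zeta in CC.
        destruct CC as [_ [_ [_ [_ [C5 [C6 [C7 [C8 [C9 C10]]]]]]]]].
        destruct (pz_split _ _ _ _ (Hnz u v Hm)) as [Z1 [Z2 Z3]].
        unfold mean_curv, metric_coef. rewrite A2, A3, A4, C5. unfold N. rewrite C10.
        field. repeat split; auto.
    + exists (fun _ _ => 1). split; [apply (Sm2_smooth a b c d); intro; apply Sm2_const|].
      intros u v Hm. destruct (KEY u v Hm) as [A1 [A2 [A3 [A4 [A5 A6]]]]].
      pose proof (core _ _ _ _ _ _ A5 A6 (Hnz u v Hm)) as CC. cbv zeta in CC.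
      destruct CC as [_ [_ [_ [_ [C5 _]]]]].
      split; [lra|]. unfold metric_coef, lam. rewrite A2, A3, C5. ring.
  - destruct (mat_sol a b f q Hf Hq) as [F1 HF1]. destruct (mat_sol2 c d g r Hg Hr) as [F2 [HS2 HF2]].
    exists F1, F2. split; [exact HF1|split; assumption].
  - intros F1 F2 [S1 H1] S2 H2 psi.
    set (N := fun u v => mmul (F1 u) (mmul (Kn (q u) (r v)) (minv (F2 v)))).
    assert (KEY : forall u v, M u v ->
      let X := mscale (f u) (Aq (q u)) in let Y := mscale (g v) (Br (r v)) in
      let P := F1 u in let R := minv (F2 v) in
      psi u v = mmul P (mmul mid R) /\ d_u psi u v = mmul P (mmul X R) /\
      d_v psi u v = mmul P (mmul Y R) /\ d_v (d_u psi) u v = mmul P (mmul (mmul X Y) R) /\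
      mdet P = 1 /\ mdet R = 1).
    { intros u v [Hu Hv] X Y P R.
      destruct (H1 u Hu) as [D1 E1]. destruct (H2 v Hv) as [D2 E2].
      pose proof (forms_ii F1 F2 X Y u v
         (ex_md_sm a b F1 u S1 Hu) (ex_md_sm c d F2 v S2 Hv) D1 D2 E1 E2) as FF.
      fold psi in FF.
      destruct FF as [A1 [A2 [A3 A4]]]. repeat split; auto. unfold R. apply mdet_minv; auto. }
    assert (DET : forall u v, M u v -> m11 (F2 v) * m22 (F2 v) - m12 (F2 v) * m21 (F2 v) <> 0).
    { intros u v [_ Hv]. destruct (H2 v Hv) as [D _]. unfold inSL2, mdet in D. rewrite D. lra. }
    destruct S1 as [S1a [S1b [S1c S1d]]]. destruct S2 as [S2a [S2b [S2c S2d]]].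
    split; [|split].
    + split.
      * refine (conj _ (conj _ (conj _ _))); apply (Sm2_smooth a b c d); intro n;
        unfold psi, mmul, minv, mscale, mdet; simpl; sm2_tac; exact DET.
      * intros u v Hm. destruct (KEY u v Hm) as [A1 [A2 [A3 [A4 [A5 A6]]]]].
        pose proof (core _ _ _ _ _ _ A5 A6 (Hnz u v Hm)) as CC. cbv zeta in CC.
        destruct CC as [C1 [C2 [C3 [C4 [C5 _]]]]].
        rewrite A1, A2, A3. refine (conj C1 (conj C2 (conj C3 (conj C4 _)))).
        intro E. rewrite E in C5. apply (Hnz u v Hm).
        replace (f u * g v * (1 + q u * r v) ^ 2) with ((1 + q u * r v) ^ 2 * f u * g v) by ring. rewrite <- C5. ring.
    + exists N. split.
      * split.
        -- refine (conj _ (conj _ (conj _ _))); apply (Sm2_smooth a b c d); intro n;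
           unfold N, Kn, mmul, minv, mscale, mdet; simpl; sm2_tac;
           first [exact DET | (intros u0 v0 Hm; apply NZ; exact Hm)].
        -- intros u v Hm. destruct (KEY u v Hm) as [A1 [A2 [A3 [A4 [A5 A6]]]]].
           pose proof (core _ _ _ _ _ _ A5 A6 (Hnz u v Hm)) as CC. cbv zeta in CC.
           destruct CC as [_ [_ [_ [_ [C5 [C6 [C7 [C8 [C9 C10]]]]]]]]].
           rewrite A1, A2, A3. exact (conj C6 (conj C7 (conj C8 C9))).
      * left. intros u v Hm. destruct (KEY u v Hm) as [A1 [A2 [A3 [A4 [A5 A6]]]]].
        pose proof (core _ _ _ _ _ _ A5 A6 (Hnz u v Hm)) as CC. cbv zeta in CC.
        destruct CC as [_ [_ [_ [_ [C5 [C6 [C7 [C8 [C9 C10]]]]]]]]].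
        destruct (pz_split _ _ _ _ (Hnz u v Hm)) as [Z1 [Z2 Z3]].
        unfold mean_curv, metric_coef. rewrite A2, A3, A4, C5. unfold N. rewrite C10.
        field. repeat split; auto.
    + exists (fun _ _ => 1). split; [apply (Sm2_smooth a b c d); intro; apply Sm2_const|].
      intros u v Hm. destruct (KEY u v Hm) as [A1 [A2 [A3 [A4 [A5 A6]]]]].
      pose proof (core _ _ _ _ _ _ A5 A6 (Hnz u v Hm)) as CC. cbv zeta in CC.
      destruct CC as [_ [_ [_ [_ [C5 _]]]]].
      split; [lra|]. unfold metric_coef, lam. rewrite A2, A3, C5. ring.
Qed.
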